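(* Let $\mathbb{X}$ be a real reflexive Banach space, $\mathbb{Y}$ a real normed linear space, and $0\neq T\in\mathbb{K}(\mathbb{X},\mathbb{Y})$. Then the following are equivalent: (i) $T$ is a smooth point of $\mathbb{K}(\mathbb{X},\mathbb{Y})$. (ii) $M_T=\{\pm x_0\}$ for some $x_0\in S_{\mathbb{X}}$ and $Tx_0$ is a smooth point of $\mathbb{Y}$. (iii) For every $A\in\mathbb{K}(\mathbb{X},\mathbb{Y})$: $T\perp_B A$ if and only if for every semi-inner-product $[\cdot,\cdot]$ on $\mathbb{Y}$ compatible with the norm and every norming sequence $\{x_n\}$ for $T$, every subsequential limit of $\{[Ax_n,Tx_n]\}$ equals $0$.
   Context: All spaces are real. $\mathbb{K}(\mathbb{X},\mathbb{Y})$ is the space of compact linear operators with the operator norm; $S_{\mathbb{X}}$ is the unit sphere; $M_T=\{x\in S_{\mathbb{X}}:\|Tx\|=\|T\|\}$. A nonzero element $x$ of a normed space $\mathbb{Z}$ is smooth if there is a unique $f\in\mathbb{Z}^*$ with $\|f\|=1$ and $f(x)=\|x\|$. $x\perp_B y$ means $\|x+\lambda y\|\ge\|x\|$ for all $\lambda\in\mathbb{R}$. A norming sequence for $T$ is $\{x_n\}\subseteq S_{\mathbb{X}}$ with $\|Tx_n\|\to\|T\|$. A semi-inner-product on $\mathbb{Y}$ is a map $[\cdot,\cdot]:\mathbb{Y}\times\mathbb{Y}\to\mathbb{R}$, linear in the first variable, with $[x,x]>0$ for $x\ne0$, $|[x,y]|^2\le[x,x][y,y]$, $[x,\alpha y]=\alpha[x,y]$;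 compatible with the norm means $[x,x]=\|x\|^2$. *)

(* Defs.v *)
From Stdlib Require Import Reals ClassicalEpsilon.
Open Scope R_scope.

Record NormedSpace : Type := mkNormedSpace {
  car :> Type;
  zero : car;
  add : car -> car -> car;
  opp : car -> car;
  scal : R -> car -> car;
  norm : car -> R;
  add_assoc : forall x y z, add x (add y z) = add (add x y) z;
  add_comm : forall x y, add x y = add y x;
  add_zero : forall x, add x zero = x;
  add_opp : forall x, add x (opp x) = zero;
  scal_assoc : forall a b x, scal a (scal b x) = scal (a * b) x;
  scal_one : forall x, scal 1 x = x;
  scal_add_r : forall a x y, scal a (add x y) = add (scal a x) (scal a y);
  scal_add_l : forall a b x, scal (a + b) x = add (scal a x) (scal b x);
  norm_eq_zero : forall x, norm x = 0 -> x = zero;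
  norm_triangle : forall x y, norm (add x y) <= norm x + norm y;
  norm_scal : forall a x, norm (scal a x) = Rabs a * norm x
}.

Arguments zero {_}.
Arguments add {_} _ _.
Arguments opp {_} _.
Arguments scal {_} _ _.
Arguments norm {_} _.

Definition sub {N : NormedSpace} (x y : N) : N := add x (opp y).

Definition seq_converges {N : NormedSpace} (u : nat -> N) (l : N) : Prop :=
  forall eps, eps > 0 -> exists K, forall n, (n >= K)%nat -> norm (sub (u n) l) < eps.

Definition cauchy_seq {N : NormedSpace} (u : nat -> N) : Prop :=
  forall eps, eps > 0 -> exists K, forall m n, (m >= K)%nat -> (n >= K)%nat ->
    norm (sub (u m) (u n)) < eps.

Definition Banach (N : NormedSpace) : Prop :=
  forall u : nat -> N, cauchy_seq u -> exists l, seq_converges u l.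

Definition strictly_increasing (phi : nat -> nat) : Prop :=
  forall n, (phi n < phi (S n))%nat.

(* sup { h x : ||x|| <= 1 }  (meaningful when this sup exists) *)
Definition sup_on_ball {X : NormedSpace} (h : X -> R) : R :=
  epsilon (inhabits 0) (fun r => is_lub (fun s => exists x : X, norm x <= 1 /\ s = h x) r).

Definition linear_map {X Y : NormedSpace} (T : X -> Y) : Prop :=
  (forall x y, T (add x y) = add (T x) (T y)) /\
  (forall a x, T (scal a x) = scal a (T x)).

Definition linear_functional {X : NormedSpace} (f : X -> R) : Prop :=
  (forall x y, f (add x y) = f x + f y) /\ (forall a x, f (scal a x) = a * f x).

Definition in_dual {X : NormedSpace} (f : X -> R) : Prop :=
  linear_functional f /\ exists C, forall x, Rabs (f x) <= C * norm x.

Definition dual_norm {X : NormedSpace} (f : X -> R) : R :=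
  sup_on_ball (fun x => Rabs (f x)).

(* reflexive: the canonical embedding X -> X^** is onto *)
Definition reflexive (X : NormedSpace) : Prop :=
  forall Phi : (X -> R) -> R,
    (forall f g, in_dual f -> in_dual g -> Phi (fun x => f x + g x) = Phi f + Phi g) ->
    (forall a f, in_dual f -> Phi (fun x => a * f x) = a * Phi f) ->
    (exists C, forall f, in_dual f -> Rabs (Phi f) <= C * dual_norm f) ->
    exists x : X, forall f, in_dual f -> Phi f = f x.

(* compact linear operators: image of the unit ball is relatively compact
   (sequentially: every bounded sequence has an image with a convergent
   subsequence in Y) *)
Definition compact_op {X Y : NormedSpace} (T : X -> Y) : Prop :=
  linear_map T /\
  forall u : nat -> X, (forall n, norm (u n) <= 1) ->
    exists (phi : nat -> nat) (l : Y), strictly_increasing phi /\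
      seq_converges (fun n => T (u (phi n))) l.

Definition op_norm {X Y : NormedSpace} (T : X -> Y) : R :=
  sup_on_ball (fun x => norm (T x)).

Definition op_add {X Y : NormedSpace} (A B : X -> Y) : X -> Y := fun x => add (A x) (B x).
Definition op_scal {X Y : NormedSpace} (a : R) (A : X -> Y) : X -> Y := fun x => scal a (A x).
Definition op_zero {X Y : NormedSpace} : X -> Y := fun _ => zero.

(* Generic smoothness in a (sub)space P of a real vector space V with norm nrm:
   f is an element of the dual of P with norm 1. *)
Definition norm_one_functional {V : Type} (P : V -> Prop) (addV : V -> V -> V)
  (scalV : R -> V -> V) (nrm : V -> R) (f : V -> R) : Prop :=
  (forall u v, P u -> P v -> f (addV u v) = f u + f v) /\
  (forall a u, P u -> f (scalV a u) = a * f u) /\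
  is_lub (fun r => exists u, P u /\ nrm u <= 1 /\ r = Rabs (f u)) 1.

Definition smooth_in {V : Type} (P : V -> Prop) (addV : V -> V -> V)
  (scalV : R -> V -> V) (zeroV : V) (nrm : V -> R) (v : V) : Prop :=
  P v /\ v <> zeroV /\
  exists f, norm_one_functional P addV scalV nrm f /\ f v = nrm v /\
    forall g, norm_one_functional P addV scalV nrm g -> g v = nrm v ->
      forall u, P u -> g u = f u.

Definition smooth_point {Y : NormedSpace} (y : Y) : Prop :=
  smooth_in (fun _ => True) (@add Y) (@scal Y) zero (@norm Y) y.

Definition smooth_point_K {X Y : NormedSpace} (T : X -> Y) : Prop :=
  smooth_in (@compact_op X Y) op_add op_scal op_zero op_norm T.

Definition norm_attainment_set {X Y : NormedSpace} (T : X -> Y) (x : X) : Prop :=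
  norm x = 1 /\ norm (T x) = op_norm T.

Definition BJ_orth_K {X Y : NormedSpace} (T A : X -> Y) : Prop :=
  forall lam : R, op_norm (op_add T (op_scal lam A)) >= op_norm T.

Definition compatible_sip {Y : NormedSpace} (s : Y -> Y -> R) : Prop :=
  (forall x y z, s (add x y) z = s x z + s y z) /\
  (forall a x y, s (scal a x) y = a * s x y) /\
  (forall x, x <> zero -> s x x > 0) /\
  (forall x y, (s x y) ^ 2 <= s x x * s y y) /\
  (forall a x y, s x (scal a y) = a * s x y) /\
  (forall x, s x x = (norm x) ^ 2).

Definition norming_sequence {X Y : NormedSpace} (T : X -> Y) (u : nat -> X) : Prop :=
  (forall n, norm (u n) = 1) /\ Un_cv (fun n => norm (T (u n))) (op_norm T).

Definition subsequential_limit (s : nat -> R) (l : R) : Prop :=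
  exists phi, strictly_increasing phi /\ Un_cv (fun n => s (phi n)) l.

(* Main.v *)
Require Import Defs.
From Stdlib Require Import Reals ClassicalEpsilon.
From Stdlib Require Import Lra Lia Classical FunctionalExtensionality PropExtensionality.
From mathcomp Require ssreflect ssrbool boolp classical_sets.
Open Scope R_scope.

Module ZW.
Import mathcomp.boot.ssreflect mathcomp.boot.ssrbool mathcomp.classical.boolp mathcomp.classical.classical_sets.
Lemma zorn_prop (T : Type) (t0 : T) (R : T -> T -> Prop) :
  (forall t, R t t) -> (forall r s t, R r s -> R s t -> R r t) ->
  (forall A : T -> Prop, (forall s t, A s -> A t -> R s t \/ R t s) ->
     exists t, forall s, A s -> R s t) ->
  exists t, forall s, R t s -> R s t.
Proof.
move=> Rr Rt Ch.
pose Rb := fun a b => `[< R a b >].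
edestruct (@ZL_preorder T t0 Rb) as [t Ht].
- by move=> t; apply/asboolP.
- by move=> r s t /asboolP H1 /asboolP H2; apply/asboolP; exact: Rt H1 H2.
- move=> A HA.
  have HA' : forall s u, A s -> A u -> R s u \/ R u s.
    move=> s u As Au; case: (HA s u As Au) => /asboolP H; [left|right]; exact H.
  case: (Ch A HA') => t Ht.
  by exists t => s As; apply/asboolP; exact: Ht.
exists t => s Hs; have := Ht s; rewrite /Rb => H.
by apply/asboolP; apply: H; apply/asboolP.
Qed.
End ZW.
Open Scope R_scope.

Open Scope R_scope.

Record VS : Type := mkVS {
  vcar :> Type;
  vz : vcar;
  vadd : vcar -> vcar -> vcar;
  vscal : R -> vcar -> vcar;
  va_assoc : forall x y z, vadd x (vadd y z) = vadd (vadd x y) z;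
  va_comm : forall x y, vadd x y = vadd y x;
  va_zero : forall x, vadd x vz = x;
  va_opp : forall x, vadd x (vscal (-1) x) = vz;
  vs_assoc : forall a b x, vscal a (vscal b x) = vscal (a * b) x;
  vs_one : forall x, vscal 1 x = x;
  vs_add_r : forall a x y, vscal a (vadd x y) = vadd (vscal a x) (vscal a y);
  vs_add_l : forall a b x, vscal (a + b) x = vadd (vscal a x) (vscal b x)
}.
Arguments vz {_}.
Arguments vadd {_} _ _.
Arguments vscal {_} _ _.
Arguments va_assoc {_}. Arguments va_comm {_}. Arguments va_zero {_}. Arguments va_opp {_}.
Arguments vs_assoc {_}. Arguments vs_one {_}. Arguments vs_add_r {_}. Arguments vs_add_l {_}.

Section VSLemmas.
Variable V : VS.
Implicit Types x y z w : V.

Lemma va_zero_l x : vadd vz x = x.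
Proof. rewrite va_comm; apply va_zero. Qed.

Lemma va_cancel_r x y z : vadd x z = vadd y z -> x = y.
Proof.
  intro H. assert (H2: vadd (vadd x z) (vscal (-1) z) = vadd (vadd y z) (vscal (-1) z)) by (rewrite H; auto).
  rewrite <- !va_assoc, !va_opp, !va_zero in H2. exact H2.
Qed.

Lemma vs_zero_l x : vscal 0 x = vz.
Proof.
  apply (va_cancel_r _ _ (vscal 0 x)). rewrite va_zero_l, <- vs_add_l.
  f_equal; ring.
Qed.

Lemma vs_zero_r a : vscal a (@vz V) = vz.
Proof.
  rewrite <- (vs_zero_l vz), vs_assoc. replace (a*0) with 0 by ring. reflexivity.
Qed.

Lemma va_swap4 x y z w : vadd (vadd x y) (vadd z w) = vadd (vadd x z) (vadd y w).
Proof.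
  rewrite <- !va_assoc. f_equal. rewrite !va_assoc. f_equal. apply va_comm.
Qed.

Lemma va_inv x y : vadd x y = vz -> y = vscal (-1) x.
Proof.
  intro H. rewrite <- (va_zero_l y), <- (va_opp x), (va_comm x), <- va_assoc, H, va_zero.
  reflexivity.
Qed.

Lemma vsub_zero x y : vadd x (vscal (-1) y) = vz -> x = y.
Proof.
  intro H. apply va_inv in H. apply (f_equal (vscal (-1))) in H.
  rewrite !vs_assoc in H. replace (-1 * -1) with 1 in H by ring.
  rewrite !vs_one in H. auto.
Qed.

Lemma vscal_combine a b x : vadd (vscal a x) (vscal b x) = vscal (a + b) x.
Proof. rewrite vs_add_l; auto. Qed.

Lemma vsub_lin w1 t1 w2 t2 (v : V) :
  vadd (vadd w1 (vscal t1 v)) (vscal (-1) (vadd w2 (vscal t2 v))) =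
  vadd (vadd w1 (vscal (-1) w2)) (vscal (t1 - t2) v).
Proof.
  rewrite vs_add_r, va_swap4, vs_assoc, vscal_combine. f_equal. f_equal; ring.
Qed.

Lemma vadd_lin w1 t1 w2 t2 (v : V) :
  vadd (vadd w1 (vscal t1 v)) (vadd w2 (vscal t2 v)) =
  vadd (vadd w1 w2) (vscal (t1 + t2) v).
Proof. rewrite va_swap4, vscal_combine; auto. Qed.

Lemma vscal_lin a w t (v : V) :
  vscal a (vadd w (vscal t v)) = vadd (vscal a w) (vscal (a * t) v).
Proof. rewrite vs_add_r, vs_assoc; auto. Qed.

End VSLemmas.
Arguments va_zero_l {V}. Arguments va_cancel_r {V}. Arguments vs_zero_l {V}. Arguments vs_zero_r {V}.
Arguments va_swap4 {V}. Arguments va_inv {V}. Arguments vsub_zero {V}. Arguments vscal_combine {V}.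
Arguments vsub_lin {V}. Arguments vadd_lin {V}. Arguments vscal_lin {V}.

Open Scope R_scope.

Definition subsp {V : VS} (G : V -> Prop) :=
  G vz /\ (forall x y, G x -> G y -> G (vadd x y)) /\ (forall a x, G x -> G (vscal a x)).
Definition lin_on {V : VS} (G : V -> Prop) (g : V -> R) :=
  (forall x y, G x -> G y -> g (vadd x y) = g x + g y) /\ (forall a x, G x -> g (vscal a x) = a * g x).

Section HahnBanach.
Variable V : VS.
Variable E : V -> Prop.
Variable p : V -> R.
Hypothesis HE : subsp E.
Hypothesis p_sub : forall x y, E x -> E y -> p (vadd x y) <= p x + p y.
Hypothesis p_pos : forall a x, 0 <= a -> E x -> p (vscal a x) = a * p x.
Variable M : V -> Prop.
Variable l : V -> R.
Hypothesis HM : subsp M.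
Hypothesis HME : forall x, M x -> E x.
Hypothesis Hl : lin_on M l.
Hypothesis Hlp : forall x, M x -> l x <= p x.

Definition ext_ok (G : V -> Prop) (g : V -> R) :=
  subsp G /\ (forall x, G x -> E x) /\ (forall x, M x -> G x) /\ lin_on G g /\
  (forall x, M x -> g x = l x) /\ (forall x, G x -> g x <= p x).

Lemma one_step G g : ext_ok G g -> forall v, E v -> ~ G v ->
  exists G' g', ext_ok G' g' /\ (forall x, G x -> G' x) /\ (forall x, G x -> g' x = g x) /\ G' v.
Proof.
  intros [[G0 [Gadd Gscal]] [GE [MG [[gadd gscal] [gl gp]]]]] v Ev nGv.
  destruct HE as [E0 [Eadd Escal]].
  set (S := fun r => exists w, G w /\ r = g w - p (vadd w (vscal (-1) v))).
  assert (Hbound : forall w w', G w -> G w' -> g w - p (vadd w (vscal (-1) v)) <= p (vadd w' v) - g w').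
  { intros w w' Gw Gw'.
    assert (g (vadd w w') <= p (vadd w w')) by (apply gp; auto).
    rewrite gadd in H by auto.
    assert (Heq : vadd w w' = vadd (vadd w (vscal (-1) v)) (vadd w' v)).
    { rewrite va_swap4, (va_comm (vscal (-1) v)), va_opp, va_zero. reflexivity. }
    assert (p (vadd w w') <= p (vadd w (vscal (-1) v)) + p (vadd w' v)).
    { rewrite Heq. apply p_sub; auto. }
    lra. }
  destruct (completeness S) as [c [cub club]].
  { exists (p (vadd vz v) - g vz). intros r [w [Gw ->]]. apply Hbound; auto. }
  { exists (g vz - p (vadd vz (vscal (-1) v))). exists vz. auto. }
  assert (c_lo : forall w, G w -> g w - p (vadd w (vscal (-1) v)) <= c).
  { intros w Gw. apply cub. exists w; auto. }
  assert (c_hi : forall w, G w -> c <= p (vadd w v) - g w).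
  { intros w Gw. apply club. intros r [w' [Gw' ->]]. apply Hbound; auto. }
  assert (uniq : forall w1 t1 w2 t2, G w1 -> G w2 ->
            vadd w1 (vscal t1 v) = vadd w2 (vscal t2 v) -> t1 = t2 /\ w1 = w2).
  { intros w1 t1 w2 t2 G1 G2 Heq.
    assert (H0 : vadd (vadd w1 (vscal (-1) w2)) (vscal (t1 - t2) v) = vz).
    { rewrite <- vsub_lin, Heq, va_opp. reflexivity. }
    destruct (Req_dec t1 t2) as [Et|Nt].
    - subst t2. split; auto. rewrite Rminus_diag, vs_zero_l, va_zero in H0.
      apply vsub_zero; auto.
    - exfalso. apply nGv. apply va_inv in H0.
      apply (f_equal (vscal (/ (t1 - t2)))) in H0.
      rewrite vs_assoc in H0. replace (/ (t1 - t2) * (t1 - t2)) with 1 in H0 by (field; lra).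
      rewrite vs_one in H0. rewrite H0. apply Gscal, Gscal, Gadd; auto. }
  set (G' := fun u => exists w t, G w /\ u = vadd w (vscal t v)).
  set (g' := fun u => epsilon (inhabits 0) (fun r => exists w t, G w /\ u = vadd w (vscal t v) /\ r = g w + t * c)).
  assert (g'_eq : forall w t, G w -> g' (vadd w (vscal t v)) = g w + t * c).
  { intros w t Gw. unfold g'.
    assert (Hex : exists r, exists w0 t0, G w0 /\ vadd w (vscal t v) = vadd w0 (vscal t0 v) /\ r = g w0 + t0 * c).
    { exists (g w + t * c), w, t. auto. }
    destruct (epsilon_spec (inhabits 0) _ Hex) as [w0 [t0 [Gw0 [Heq ->]]]].
    destruct (uniq _ _ _ _ Gw Gw0 Heq) as [-> ->]. reflexivity. }
  assert (GG' : forall x, G x -> G' x).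
  { intros x Gx. exists x, 0. split; auto. rewrite vs_zero_l, va_zero; auto. }
  assert (gg' : forall x, G x -> g' x = g x).
  { intros x Gx. rewrite <- (va_zero x) at 1. rewrite <- (vs_zero_l v). rewrite g'_eq; auto. ring. }
  exists G', g'. split; [|split; [|split]]; auto.
  2: { exists vz, 1. rewrite vs_one, va_zero_l. auto. }
  split; [|split; [|split; [|split; [|split]]]].
  - split; [|split].
    + apply GG'; auto.
    + intros x y [w1 [t1 [G1 ->]]] [w2 [t2 [G2 ->]]]. rewrite vadd_lin. exists (vadd w1 w2), (t1 + t2). auto.
    + intros a x [w1 [t1 [G1 ->]]]. rewrite vscal_lin. exists (vscal a w1), (a * t1). auto.
  - intros x [w1 [t1 [G1 ->]]]. apply Eadd; auto.
  - intros x Mx. apply GG'; auto.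
  - split.
    + intros x y [w1 [t1 [G1 ->]]] [w2 [t2 [G2 ->]]]. rewrite vadd_lin, !g'_eq; auto. rewrite gadd; auto. ring.
    + intros a x [w1 [t1 [G1 ->]]]. rewrite vscal_lin, !g'_eq; auto. rewrite gscal; auto. ring.
  - intros x Mx. rewrite gg'; auto.
  - intros x [w [t [Gw ->]]]. rewrite g'_eq; auto.
    destruct (Rtotal_order t 0) as [Hlt|[H0|Hgt]].
    + set (s := - t). assert (Hs : 0 < s) by (unfold s; lra).
      assert (Hc := c_lo (vscal (/ s) w) (Gscal _ _ Gw)).
      rewrite gscal in Hc; auto.
      assert (Heq : vadd w (vscal t v) = vscal s (vadd (vscal (/ s) w) (vscal (-1) v))).
      { rewrite vscal_lin, vs_assoc. replace (s * / s) with 1 by (field; lra). rewrite vs_one.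
        f_equal. f_equal. unfold s; ring. }
      rewrite Heq, p_pos; try lra; try (apply Eadd; auto; apply Escal; auto).
      replace t with (- s) by (unfold s; ring).
      assert (s * (/ s * g w - p (vadd (vscal (/ s) w) (vscal (-1) v))) <= s * c) by (apply Rmult_le_compat_l; lra).
      replace (s * (/ s * g w - p (vadd (vscal (/ s) w) (vscal (-1) v)))) with
        (g w - s * p (vadd (vscal (/ s) w) (vscal (-1) v))) in H by (field; lra).
      lra.
    + subst t. rewrite vs_zero_l, va_zero. replace (0 * c) with 0 by ring. rewrite Rplus_0_r. apply gp; auto.
    + assert (Hc := c_hi (vscal (/ t) w) (Gscal _ _ Gw)).
      rewrite gscal in Hc; auto.
      assert (Heq : vadd w (vscal t v) = vscal t (vadd (vscal (/ t) w) v)).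
      { rewrite vs_add_r, vs_assoc. replace (t * / t) with 1 by (field; lra). rewrite vs_one. auto. }
      rewrite Heq, p_pos; try lra; try (apply Eadd; auto).
      assert (t * c <= t * (p (vadd (vscal (/ t) w) v) - / t * g w)) by (apply Rmult_le_compat_l; lra).
      replace (t * (p (vadd (vscal (/ t) w) v) - / t * g w)) with (t * p (vadd (vscal (/ t) w) v) - g w) in H by (field; lra).
      lra.
Qed.

Theorem hahn_banach : exists F, lin_on E F /\ (forall x, M x -> F x = l x) /\ (forall x, E x -> F x <= p x).
Proof.
  set (T := {q : (V -> Prop) * (V -> R) | ext_ok (fst q) (snd q)}).
  assert (ok0 : ext_ok M l).
  { split; [auto|split; [auto|split; [auto|split; [auto|split; auto]]]]. }
  set (t0 := exist (fun q : (V -> Prop) * (V -> R) => ext_ok (fst q) (snd q)) (M, l) ok0 : T).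
  set (Rel := fun (a b : T) => (forall x, fst (proj1_sig a) x -> fst (proj1_sig b) x) /\
                (forall x, fst (proj1_sig a) x -> snd (proj1_sig b) x = snd (proj1_sig a) x)).
  destruct (ZW.zorn_prop T t0 Rel) as [[[G g] okG] Hmax].
  - intros t. split; auto.
  - intros a b c [H1 H2] [H3 H4]. split; auto. intros x Hx. rewrite H4; auto.
  - intros A Htot.
    set (GU := fun u => M u \/ exists e : T, A e /\ fst (proj1_sig e) u).
    set (gU := fun u => epsilon (inhabits 0) (fun r => (M u /\ r = l u) \/
                 exists e : T, A e /\ fst (proj1_sig e) u /\ r = snd (proj1_sig e) u)).
    assert (gU_M : forall u, M u -> gU u = l u).
    { intros u Mu. unfold gU.
      assert (Hex : exists r, (M u /\ r = l u) \/ exists e : T, A e /\ fst (proj1_sig e) u /\ r = snd (proj1_sig e) u).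
      { exists (l u). left; auto. }
      destruct (epsilon_spec (inhabits 0) _ Hex) as [[_ H]|[e [Ae [Geu H]]]]; auto.
      rewrite H. clear H. pose proof (proj2_sig e) as oke. simpl in oke. destruct oke as [_ [_ [_ [_ [H' _]]]]]. auto. }
    assert (gU_e : forall (e : T) u, A e -> fst (proj1_sig e) u -> gU u = snd (proj1_sig e) u).
    { intros e u Ae Geu. unfold gU.
      assert (Hex : exists r, (M u /\ r = l u) \/ exists e : T, A e /\ fst (proj1_sig e) u /\ r = snd (proj1_sig e) u).
      { exists (snd (proj1_sig e) u). right. exists e; auto. }
      destruct (epsilon_spec (inhabits 0) _ Hex) as [[Mu Hr]|[e' [Ae' [Geu' Hr]]]].
      - rewrite Hr. clear Hr Hex. pose proof (proj2_sig e) as oke. simpl in oke. destruct oke as [_ [_ [_ [_ [H' _]]]]]. symmetry; auto.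
      - rewrite Hr. destruct (Htot e e' Ae Ae') as [[H1 H2]|[H1 H2]]; auto. rewrite H2; auto. }
    assert (common : forall u1 u2, GU u1 -> GU u2 -> (M u1 /\ M u2) \/
               exists e : T, A e /\ fst (proj1_sig e) u1 /\ fst (proj1_sig e) u2).
    { intros u1 u2 [M1|[e1 [A1 G1]]] [M2|[e2 [A2 G2]]].
      - left; auto.
      - right. exists e2. split; auto. split; auto. pose proof (proj2_sig e2) as oke. simpl in oke.
        destruct oke as [_ [_ [H _]]]. auto.
      - right. exists e1. split; auto. split; auto. pose proof (proj2_sig e1) as oke. simpl in oke.
        destruct oke as [_ [_ [H _]]]. auto.
      - right. destruct (Htot e1 e2 A1 A2) as [[H1 _]|[H1 _]].
        + exists e2; auto.
        + exists e1; auto. }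
    assert (okU : ext_ok GU gU).
    { destruct HM as [M0 [Madd Mscal]]. destruct Hl as [ladd lscal].
      split; [|split; [|split; [|split; [|split]]]].
      - split; [|split].
        + left; auto.
        + intros x y Hx Hy. destruct (common x y Hx Hy) as [[Mx My]|[e [Ae [Gx Gy]]]].
          * left; auto.
          * right. exists e. split; auto. pose proof (proj2_sig e) as oke. simpl in oke.
            destruct oke as [[_ [H _]] _]. auto.
        + intros a x [Mx|[e [Ae Gx]]]. left; auto. right. exists e. split; auto.
          pose proof (proj2_sig e) as oke. simpl in oke. destruct oke as [[_ [_ H]] _]. auto.
      - intros x [Mx|[e [Ae Gx]]]. auto. pose proof (proj2_sig e) as oke. simpl in oke. apply oke; auto.
      - intros x Mx. left; auto.
      - split.
        + intros x y Hx Hy. destruct (common x y Hx Hy) as [[Mx My]|[e [Ae [Gx Gy]]]].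
          * rewrite !gU_M; auto.
          * assert (Gxy : fst (proj1_sig e) (vadd x y)).
            { pose proof (proj2_sig e) as oke. simpl in oke. destruct oke as [[_ [H _]] _]. auto. }
            rewrite (gU_e e x), (gU_e e y), (gU_e e (vadd x y)); auto.
            pose proof (proj2_sig e) as oke. simpl in oke. destruct oke as [_ [_ [_ [[H _] _]]]]. auto.
        + intros a x [Mx|[e [Ae Gx]]].
          * rewrite !gU_M; auto.
          * assert (Gax : fst (proj1_sig e) (vscal a x)).
            { pose proof (proj2_sig e) as oke. simpl in oke. destruct oke as [[_ [_ H]] _]. auto. }
            rewrite (gU_e e x), (gU_e e (vscal a x)); auto.
            pose proof (proj2_sig e) as oke. simpl in oke. destruct oke as [_ [_ [_ [[_ H] _]]]]. auto.
      - apply gU_M.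
      - intros x [Mx|[e [Ae Gx]]].
        + rewrite gU_M; auto.
        + rewrite (gU_e e x); auto. pose proof (proj2_sig e) as oke. simpl in oke. apply oke; auto. }
    exists (exist (fun q : (V -> Prop) * (V -> R) => ext_ok (fst q) (snd q)) (GU, gU) okU).
    intros e Ae. split; simpl.
    + intros x Gx. right. exists e; auto.
    + intros x Gx. apply (gU_e e x); auto.
  - simpl in *. exists g.
    assert (GE : forall x, E x -> G x).
    { intros v Ev. apply NNPP. intro nGv.
      destruct (one_step G g okG v Ev nGv) as [G' [g' [ok' [H1 [H2 H3]]]]].
      set (q' := exist (fun q : (V -> Prop) * (V -> R) => ext_ok (fst q) (snd q)) (G', g') ok').
      destruct (Hmax q') as [H4 _].
      { split; simpl; auto. }
      simpl in H4. auto. }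
    clear Hmax. destruct okG as [_ [GsE [MG [[gadd gscal] [gl gp]]]]].
    split; [split|split]; auto.
Qed.

End HahnBanach.

Open Scope R_scope.
Arguments add_assoc {_}. Arguments add_comm {_}. Arguments add_zero {_}. Arguments add_opp {_}.
Arguments scal_assoc {_}. Arguments scal_one {_}. Arguments scal_add_r {_}. Arguments scal_add_l {_}.
Arguments norm_eq_zero {_}. Arguments norm_triangle {_}. Arguments norm_scal {_}.

Section NSLemmas.
Variable N : NormedSpace.
Implicit Types x y z : N.

Lemma add_0_l x : add zero x = x.
Proof. rewrite add_comm; apply add_zero. Qed.

Lemma add_cancel_r x y z : add x z = add y z -> x = y.
Proof.
  intro H. assert (H2: add (add x z) (opp z) = add (add y z) (opp z)) by (rewrite H; auto).
  rewrite <- !add_assoc, !add_opp, !add_zero in H2. exact H2.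
Qed.

Lemma scal_0 x : scal 0 x = zero.
Proof.
  apply (add_cancel_r _ _ (scal 0 x)). rewrite add_0_l, <- scal_add_l. f_equal; ring.
Qed.

Lemma opp_scal x : opp x = scal (-1) x.
Proof.
  apply (add_cancel_r _ _ x). rewrite (add_comm (opp x)), add_opp.
  rewrite <- (scal_one x) at 2. rewrite <- scal_add_l. replace (-1 + 1) with 0 by ring.
  rewrite scal_0; auto.
Qed.

Lemma scal_zero a : scal a (@zero N) = zero.
Proof. rewrite <- (scal_0 zero), scal_assoc. f_equal; ring. Qed.

Lemma norm_zero : norm (@zero N) = 0.
Proof. rewrite <- (scal_0 zero), norm_scal, Rabs_R0. ring. Qed.

Lemma norm_opp x : norm (opp x) = norm x.
Proof. rewrite opp_scal, norm_scal. replace (Rabs (-1)) with 1 by (unfold Rabs; destruct Rcase_abs; lra). ring. Qed.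

Lemma norm_nonneg x : 0 <= norm x.
Proof.
  assert (H := norm_triangle x (opp x)). rewrite add_opp, norm_zero, norm_opp in H. lra.
Qed.

Lemma norm_pos x : x <> zero -> 0 < norm x.
Proof.
  intro H. destruct (norm_nonneg x) as [h|h]; auto. exfalso; apply H, norm_eq_zero; auto.
Qed.

Lemma sub_self x : sub x x = zero.
Proof. apply add_opp. Qed.

Lemma sub_eq x y : sub x y = zero -> x = y.
Proof.
  unfold sub. intro H. apply (add_cancel_r _ _ (opp y)). rewrite H, add_opp. auto.
Qed.

Lemma norm_sub_sym x y : norm (sub x y) = norm (sub y x).
Proof.
  unfold sub. rewrite <- norm_opp, !opp_scal, scal_add_r, scal_assoc, add_comm.
  f_equal. f_equal. replace (-1 * -1) with 1 by ring. apply scal_one.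
Qed.

Lemma sub_add3 x y z : add (sub x y) (sub y z) = sub x z.
Proof.
  unfold sub. rewrite <- add_assoc. f_equal. rewrite add_assoc, (add_comm (opp y) y), add_opp, add_0_l. auto.
Qed.

Lemma norm_sub_triangle x y z : norm (sub x z) <= norm (sub x y) + norm (sub y z).
Proof. rewrite <- (sub_add3 x y z). apply norm_triangle. Qed.

Lemma add_sub x y : add (sub x y) y = x.
Proof. unfold sub. rewrite <- add_assoc, (add_comm (opp y)), add_opp, add_zero. auto. Qed.

Lemma norm_rev x y : Rabs (norm x - norm y) <= norm (sub x y).
Proof.
  apply Rabs_le. split.
  - assert (H := norm_triangle (sub y x) x). rewrite add_sub in H. rewrite norm_sub_sym in H. lra.
  - assert (H := norm_triangle (sub x y) y). rewrite add_sub in H. lra.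
Qed.

Lemma norm_sub_le x y : norm (sub x y) <= norm x + norm y.
Proof. unfold sub. rewrite <- (norm_opp y). apply norm_triangle. Qed.

Lemma sub_add_add (a b c d : N) : sub (add a b) (add c d) = add (sub a c) (sub b d).
Proof.
  unfold sub. rewrite !opp_scal, scal_add_r. rewrite <- !add_assoc. f_equal.
  rewrite !add_assoc. f_equal. apply add_comm.
Qed.

Lemma sub_scal a x y : sub (scal a x) (scal a y) = scal a (sub x y).
Proof. unfold sub. rewrite !opp_scal, scal_add_r, !scal_assoc. f_equal. f_equal. ring. Qed.

Lemma scal_sub_l a b x : sub (scal a x) (scal b x) = scal (a - b) x.
Proof. unfold sub. rewrite opp_scal, scal_assoc, <- scal_add_l. f_equal. ring. Qed.

Lemma add_swap4 (a b c d : N) : add (add a b) (add c d) = add (add a c) (add b d).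
Proof. rewrite <- !add_assoc. f_equal. rewrite !add_assoc. f_equal. apply add_comm. Qed.

Definition VS_of : VS.
Proof.
  refine (mkVS N zero add scal (@add_assoc N) (@add_comm N) (@add_zero N) _
    (@scal_assoc N) (@scal_one N) (@scal_add_r N) (@scal_add_l N)).
  intro x. rewrite <- opp_scal. apply add_opp.
Defined.

End NSLemmas.
Arguments add_0_l {N}. Arguments add_cancel_r {N}. Arguments scal_0 {N}. Arguments opp_scal {N}.
Arguments scal_zero {N}. Arguments norm_zero {N}. Arguments norm_opp {N}. Arguments norm_nonneg {N}.
Arguments norm_pos {N}. Arguments sub_self {N}. Arguments sub_eq {N}. Arguments norm_sub_sym {N}.
Arguments sub_add3 {N}. Arguments norm_sub_triangle {N}. Arguments add_sub {N}. Arguments norm_rev {N}.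
Arguments norm_sub_le {N}. Arguments add_swap4 {N}. Arguments sub_add_add {N}. Arguments sub_scal {N}. Arguments scal_sub_l {N}.

Open Scope R_scope.

Lemma si_ge phi : strictly_increasing phi -> forall n, (n <= phi n)%nat.
Proof. intros H n; induction n; [lia|]. specialize (H n). lia. Qed.

Lemma si_mono phi : strictly_increasing phi -> forall m n, (m < n)%nat -> (phi m < phi n)%nat.
Proof.
  intros H m n Hmn. induction Hmn. apply H. specialize (H m0). lia.
Qed.

Lemma si_comp phi psi : strictly_increasing phi -> strictly_increasing psi ->
  strictly_increasing (fun n => phi (psi n)).
Proof. intros H1 H2 n. apply si_mono; auto. Qed.

Lemma si_id : strictly_increasing (fun n => n).
Proof. intro n; lia. Qed.

Lemma sc_sub {N : NormedSpace} (u : nat -> N) l phi : seq_converges u l -> strictly_increasing phi ->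
  seq_converges (fun n => u (phi n)) l.
Proof.
  intros H Hp eps He. destruct (H eps He) as [K HK]. exists K. intros n Hn.
  apply HK. pose proof (si_ge phi Hp n). lia.
Qed.

Lemma Un_cv_sub (u : nat -> R) l phi : Un_cv u l -> strictly_increasing phi ->
  Un_cv (fun n => u (phi n)) l.
Proof.
  intros H Hp eps He. destruct (H eps He) as [K HK]. exists K. intros n Hn.
  apply HK. pose proof (si_ge phi Hp n). lia.
Qed.

Lemma sc_norm {N : NormedSpace} (u : nat -> N) l : seq_converges u l -> Un_cv (fun n => norm (u n)) (norm l).
Proof.
  intros H eps He. destruct (H eps He) as [K HK]. exists K. intros n Hn.
  unfold Rdist. eapply Rle_lt_trans; [apply norm_rev|]. auto.
Qed.

Lemma sc_unique {N : NormedSpace} (u : nat -> N) l1 l2 : seq_converges u l1 -> seq_converges u l2 -> l1 = l2.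
Proof.
  intros H1 H2. apply sub_eq. apply NNPP. intro Hne.
  pose proof (norm_pos _ Hne) as Hp. set (e := norm (sub l1 l2) / 2).
  destruct (H1 e) as [K1 HK1]. unfold e; lra. destruct (H2 e) as [K2 HK2]. unfold e; lra.
  pose proof (Nat.le_max_l K1 K2); pose proof (Nat.le_max_r K1 K2).
  specialize (HK1 (max K1 K2) ltac:(lia)). specialize (HK2 (max K1 K2) ltac:(lia)).
  pose proof (norm_sub_triangle l1 (u (max K1 K2)) l2) as Ht. rewrite (norm_sub_sym l1 (u _)) in Ht.
  unfold e in *. lra.
Qed.

Lemma sc_add {N : NormedSpace} (u v : nat -> N) a b : seq_converges u a -> seq_converges v b ->
  seq_converges (fun n => add (u n) (v n)) (add a b).
Proof.
  intros H1 H2 eps He. destruct (H1 (eps/2)) as [K1 HK1]. lra. destruct (H2 (eps/2)) as [K2 HK2]. lra.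
  exists (max K1 K2). intros n Hn. pose proof (Nat.le_max_l K1 K2); pose proof (Nat.le_max_r K1 K2). rewrite sub_add_add.
  eapply Rle_lt_trans; [apply norm_triangle|].
  specialize (HK1 n ltac:(lia)). specialize (HK2 n ltac:(lia)). lra.
Qed.

Lemma sc_scal {N : NormedSpace} (u : nat -> N) a c : seq_converges u a ->
  seq_converges (fun n => scal c (u n)) (scal c a).
Proof.
  intros H eps He. destruct (H (eps / (Rabs c + 1))) as [K HK].
  { apply Rdiv_lt_0_compat; auto. pose proof (Rabs_pos c); lra. }
  exists K. intros n Hn. rewrite sub_scal, norm_scal. specialize (HK n Hn).
  pose proof (Rabs_pos c).
  apply Rle_lt_trans with ((Rabs c + 1) * norm (sub (u n) a)).
  { apply Rmult_le_compat_r. apply norm_nonneg. lra. }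
  apply Rmult_lt_compat_l with (r := Rabs c + 1) in HK; [|lra].
  replace ((Rabs c + 1) * (eps / (Rabs c + 1))) with eps in HK by (field; lra). auto.
Qed.

Lemma sc_const {N : NormedSpace} (a : N) : seq_converges (fun _ => a) a.
Proof. intros eps He. exists O. intros. rewrite sub_self, norm_zero. auto. Qed.

Lemma sc_func {N : NormedSpace} (f : N -> R) C (u : nat -> N) a :
  (forall x y, f (sub x y) = f x - f y) -> (forall x, Rabs (f x) <= C * norm x) ->
  seq_converges u a -> Un_cv (fun n => f (u n)) (f a).
Proof.
  intros Hl HC H eps He.
  destruct (H (eps / (Rabs C + 1))) as [K HK].
  { apply Rdiv_lt_0_compat; auto. pose proof (Rabs_pos C); lra. }
  exists K. intros n Hn. unfold Rdist. rewrite <- Hl. specialize (HK n Hn).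
  pose proof (Rabs_pos C). pose proof (norm_nonneg (sub (u n) a)).
  eapply Rle_lt_trans; [apply HC|].
  apply Rle_lt_trans with ((Rabs C + 1) * norm (sub (u n) a)).
  { apply Rmult_le_compat_r; auto. pose proof (Rle_abs C). lra. }
  apply Rmult_lt_compat_l with (r := Rabs C + 1) in HK; [|lra].
  replace ((Rabs C + 1) * (eps / (Rabs C + 1))) with eps in HK by (field; lra). auto.
Qed.

Lemma BW_sub (u : nat -> R) M : (forall n, Rabs (u n) <= M) ->
  exists phi l, strictly_increasing phi /\ Un_cv (fun n => u (phi n)) l.
Proof.
  intros HM.
  destruct (Bolzano_Weierstrass u (fun c => -M <= c <= M) (compact_P3 (-M) M)) as [l Hl].
  { intro n. specialize (HM n). revert HM; unfold Rabs; destruct (Rcase_abs (u n)); lra. }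
  assert (Hnext : forall (Nn k : nat), exists p, (Nn <= p)%nat /\ Rabs (u p - l) < / INR (S k)).
  { intros Nn k. destruct (Hl (disc l (mkposreal (/ INR (S k)) ltac:(apply Rinv_0_lt_compat, lt_0_INR; lia))) Nn) as [p [Hp Hd]].
    { exists (mkposreal (/ INR (S k)) ltac:(apply Rinv_0_lt_compat, lt_0_INR; lia)). intros y Hy. auto. }
    exists p. split; auto. }
  set (nx := fun Nn k => proj1_sig (constructive_indefinite_description _ (Hnext Nn k))).
  assert (nxs : forall Nn k, (Nn <= nx Nn k)%nat /\ Rabs (u (nx Nn k) - l) < / INR (S k)).
  { intros. unfold nx. destruct (constructive_indefinite_description _ (Hnext Nn k)). simpl. auto. }
  set (phi := fix f n := match n with O => nx O O | S m => nx (S (f m)) (S m) end).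
  exists phi, l. split.
  - intro n. simpl. destruct (nxs (S (phi n)) (S n)). lia.
  - intros eps He. destruct (archimed (/ eps)) as [Ha _].
    destruct (INR_unbounded (/ eps)) as [K HK].
    exists K. intros n Hn. unfold Rdist.
    assert (Hb : Rabs (u (phi n) - l) < / INR (S n)).
    { destruct n; simpl; apply nxs. }
    eapply Rlt_le_trans; [apply Hb|].
    assert (INR K <= INR (S n)) by (apply le_INR; lia).
    assert (0 < / eps) by (apply Rinv_0_lt_compat; auto).
    replace eps with (/ / eps) by (field; lra).
    apply Rinv_le_contravar; lra.
Qed.

Open Scope R_scope.

Lemma Rabs_le_iff a b : Rabs a <= b <-> -b <= a <= b.
Proof. unfold Rabs; destruct (Rcase_abs a); split; intros; lra. Qed.

Section SupBall.
Variable X : NormedSpace.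

Lemma sup_on_ball_lub (h : X -> R) : (exists C, forall x, norm x <= 1 -> h x <= C) ->
  is_lub (fun s => exists x : X, norm x <= 1 /\ s = h x) (sup_on_ball h).
Proof.
  intros [C HC]. unfold sup_on_ball. apply epsilon_spec.
  destruct (completeness (fun s => exists x : X, norm x <= 1 /\ s = h x)) as [m Hm].
  - exists C. intros s [x [Hx ->]]. auto.
  - exists (h zero). exists zero. split; auto. rewrite norm_zero; lra.
  - exists m; auto.
Qed.

Lemma sup_ub (h : X -> R) x : (exists C, forall x, norm x <= 1 -> h x <= C) -> norm x <= 1 -> h x <= sup_on_ball h.
Proof. intros HC Hx. apply (sup_on_ball_lub h HC). exists x; auto. Qed.

Lemma sup_le (h : X -> R) c : (exists C, forall x, norm x <= 1 -> h x <= C) ->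
  (forall x, norm x <= 1 -> h x <= c) -> sup_on_ball h <= c.
Proof. intros HC H. apply (sup_on_ball_lub h HC). intros s [x [Hx ->]]. auto. Qed.

End SupBall.

Section Ops.
Variables X Y : NormedSpace.

Lemma lin_zero (T : X -> Y) : linear_map T -> T zero = zero.
Proof. intros [_ Hs]. rewrite <- (scal_0 zero), Hs, scal_0. auto. Qed.

Lemma lin_opp (T : X -> Y) x : linear_map T -> T (opp x) = opp (T x).
Proof. intros [_ Hs]. rewrite !opp_scal, Hs. auto. Qed.

Lemma lin_sub (T : X -> Y) x y : linear_map T -> T (sub x y) = sub (T x) (T y).
Proof. intros HT. unfold sub. destruct HT as [Ha Hs]. rewrite Ha, lin_opp; auto. split; auto. Qed.

Definition bounded_op (T : X -> Y) := linear_map T /\ exists C, 0 <= C /\ forall x, norm (T x) <= C * norm x.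

Lemma compact_bounded (T : X -> Y) : compact_op T -> bounded_op T.
Proof.
  intros [HL HC]. split; auto. apply NNPP. intro Hn.
  assert (Hx : forall n : nat, exists x, INR n * norm x < norm (T x)).
  { intro n. apply NNPP. intro H. apply Hn. exists (INR n). split. apply pos_INR.
    intro x. apply Rnot_lt_le. intro H'. apply H. exists x; auto. }
  set (xs := fun n => proj1_sig (constructive_indefinite_description _ (Hx n))).
  assert (Hxs : forall n, INR n * norm (xs n) < norm (T (xs n))).
  { intro n. unfold xs. destruct (constructive_indefinite_description _ (Hx n)). auto. }
  assert (Hnz : forall n, xs n <> zero).
  { intros n E. specialize (Hxs n). rewrite E, lin_zero, !norm_zero in Hxs; auto. lra. }
  set (u := fun n => scal (/ norm (xs n)) (xs n)).
  assert (Hu : forall n, norm (u n) = 1).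
  { intro n. unfold u. rewrite norm_scal. pose proof (norm_pos _ (Hnz n)).
    rewrite Rabs_right. field; lra. apply Rle_ge. left; apply Rinv_0_lt_compat; auto. }
  assert (HTu : forall n, INR n < norm (T (u n))).
  { intro n. unfold u. destruct HL as [_ Hs]. rewrite Hs, norm_scal. pose proof (norm_pos _ (Hnz n)).
    rewrite Rabs_right. 2: { apply Rle_ge. left; apply Rinv_0_lt_compat; auto. }
    specialize (Hxs n). apply Rmult_lt_reg_l with (norm (xs n)); auto.
    replace (norm (xs n) * (/ norm (xs n) * norm (T (xs n)))) with (norm (T (xs n))) by (field; lra). lra. }
  destruct (HC u) as [phi [l [Hphi Hl]]]. { intro n; rewrite Hu; lra. }
  destruct (Hl 1) as [K HK]. lra.
  destruct (INR_unbounded (norm l + 1)) as [K2 HK2].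
  set (n := max K K2). pose proof (Nat.le_max_l K K2). pose proof (Nat.le_max_r K K2).
  specialize (HK n ltac:(unfold n; lia)).
  pose proof (norm_rev (T (u (phi n))) l). apply Rabs_le_iff in H1.
  specialize (HTu (phi n)). pose proof (si_ge phi Hphi n).
  assert (INR K2 <= INR (phi n)) by (apply le_INR; unfold n in *; lia). lra.
Qed.

Lemma opn_C (T : X -> Y) : bounded_op T -> exists C, forall x, norm x <= 1 -> norm (T x) <= C.
Proof.
  intros [_ [C [HC0 HC]]]. exists C. intros x Hx. eapply Rle_trans; [apply HC|].
  rewrite <- (Rmult_1_r C) at 2. apply Rmult_le_compat_l; auto.
Qed.

Lemma opn_ub (T : X -> Y) x : bounded_op T -> norm x <= 1 -> norm (T x) <= op_norm T.
Proof. intros HB Hx. apply (sup_ub X (fun x => norm (T x))); auto. apply opn_C; auto. Qed.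

Lemma opn_le (T : X -> Y) c : bounded_op T -> (forall x, norm x <= 1 -> norm (T x) <= c) -> op_norm T <= c.
Proof. intros HB H. apply (sup_le X (fun x => norm (T x))); auto. apply opn_C; auto. Qed.

Lemma opn_nonneg (T : X -> Y) : bounded_op T -> 0 <= op_norm T.
Proof. intros HB. eapply Rle_trans; [apply (norm_nonneg (T zero))|]. apply opn_ub; auto. rewrite norm_zero; lra. Qed.

Lemma opn_bound (T : X -> Y) x : bounded_op T -> norm (T x) <= op_norm T * norm x.
Proof.
  intros HB. destruct (classic (x = zero)) as [->|Hx].
  - rewrite (lin_zero T), !norm_zero. lra. apply HB.
  - pose proof (norm_pos _ Hx).
    assert (H1 : norm (T (scal (/ norm x) x)) <= op_norm T).
    { apply opn_ub; auto. rewrite norm_scal, Rabs_right. right; field; lra.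
      apply Rle_ge; left; apply Rinv_0_lt_compat; auto. }
    destruct HB as [[_ Hs] _]. rewrite Hs, norm_scal, Rabs_right in H1.
    2: { apply Rle_ge; left; apply Rinv_0_lt_compat; auto. }
    apply Rmult_le_compat_r with (r := norm x) in H1; [|lra].
    replace (/ norm x * norm (T x) * norm x) with (norm (T x)) in H1 by (field; lra). lra.
Qed.

Lemma bounded_add (T A : X -> Y) : bounded_op T -> bounded_op A -> bounded_op (op_add T A).
Proof.
  intros [[Ta Ts] [C1 [H1 HC1]]] [[Aa As] [C2 [H2 HC2]]]. split; [split|].
  - intros x y. unfold op_add. rewrite Ta, Aa. rewrite add_swap4. auto.
  - intros a x. unfold op_add. rewrite Ts, As, scal_add_r. auto.
  - exists (C1 + C2). split. lra. intro x. unfold op_add. eapply Rle_trans; [apply norm_triangle|].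
    specialize (HC1 x). specialize (HC2 x). lra.
Qed.

Lemma bounded_scal (T : X -> Y) a : bounded_op T -> bounded_op (op_scal a T).
Proof.
  intros [[Ta Ts] [C1 [H1 HC1]]]. split; [split|].
  - intros x y. unfold op_scal. rewrite Ta, scal_add_r. auto.
  - intros b x. unfold op_scal. rewrite Ts, !scal_assoc, Rmult_comm. auto.
  - exists (Rabs a * C1). split. apply Rmult_le_pos; auto; apply Rabs_pos.
    intro x. unfold op_scal. rewrite norm_scal, Rmult_assoc. apply Rmult_le_compat_l; auto. apply Rabs_pos.
Qed.

Lemma compact_add (T A : X -> Y) : compact_op T -> compact_op A -> compact_op (op_add T A).
Proof.
  intros HT HA. split. apply bounded_add; apply compact_bounded; auto.
  intros u Hu. destruct (proj2 HT u Hu) as [p1 [l1 [Hp1 Hl1]]].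
  destruct (proj2 HA (fun n => u (p1 n))) as [p2 [l2 [Hp2 Hl2]]]. { intro; apply Hu. }
  exists (fun n => p1 (p2 n)), (add l1 l2). split. apply si_comp; auto.
  unfold op_add. apply sc_add; auto. apply (sc_sub (fun n => T (u (p1 n)))); auto.
Qed.

Lemma compact_scal (T : X -> Y) a : compact_op T -> compact_op (op_scal a T).
Proof.
  intros HT. split. apply bounded_scal; apply compact_bounded; auto.
  intros u Hu. destruct (proj2 HT u Hu) as [p1 [l1 [Hp1 Hl1]]].
  exists p1, (scal a l1). split; auto. unfold op_scal. apply sc_scal; auto.
Qed.

Lemma opn_scal (T : X -> Y) a : bounded_op T -> op_norm (op_scal a T) = Rabs a * op_norm T.
Proof.
  intros HB. pose proof (Rabs_pos a). apply Rle_antisym.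
  - apply opn_le. apply bounded_scal; auto. intros x Hx. unfold op_scal. rewrite norm_scal.
    apply Rmult_le_compat_l; auto. apply opn_ub; auto.
  - destruct (Req_dec a 0) as [->|Ha].
    + rewrite Rabs_R0, Rmult_0_l. apply opn_nonneg. apply bounded_scal; auto.
    + assert (0 < Rabs a) by (apply Rabs_pos_lt; auto).
      apply Rmult_le_reg_l with (/ Rabs a). apply Rinv_0_lt_compat; auto.
      replace (/ Rabs a * (Rabs a * op_norm T)) with (op_norm T) by (field; lra).
      apply opn_le; auto. intros x Hx.
      assert (H1 := opn_ub (op_scal a T) x (bounded_scal T a HB) Hx). unfold op_scal in H1.
      rewrite norm_scal in H1. apply Rmult_le_reg_l with (Rabs a); auto.
      replace (Rabs a * (/ Rabs a * op_norm (op_scal a T))) with (op_norm (op_scal a T)) by (field; lra). auto.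
Qed.

Lemma opn_add (T A : X -> Y) : bounded_op T -> bounded_op A -> op_norm (op_add T A) <= op_norm T + op_norm A.
Proof.
  intros HT HA. apply opn_le. apply bounded_add; auto. intros x Hx. unfold op_add.
  eapply Rle_trans; [apply norm_triangle|]. apply Rplus_le_compat; apply opn_ub; auto.
Qed.

Lemma opn_pos (T : X -> Y) : bounded_op T -> T <> op_zero -> 0 < op_norm T.
Proof.
  intros HB HT. destruct (classic (exists x, T x <> zero)) as [[x Hx]|Hn].
  - assert (x <> zero). { intro E; subst; apply Hx, lin_zero, HB. }
    pose proof (opn_bound T x HB). pose proof (norm_pos _ Hx). pose proof (norm_pos _ H).
    pose proof (opn_nonneg T HB). destruct H3; auto. subst. rewrite <- H3 in H0. lra.
  - exfalso. apply HT. unfold op_zero. apply functional_extensionality. intro x.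
    apply NNPP. intro H. apply Hn. exists x; auto.
Qed.

End Ops.

Open Scope R_scope.

Definition VS_fun (X : Type) : VS.
Proof.
  refine (mkVS (X -> R) (fun _ => 0) (fun f g => fun x => f x + g x) (fun a f => fun x => a * f x) _ _ _ _ _ _ _ _);
  intros; apply functional_extensionality; intros; ring.
Defined.

Section DualLemmas.
Variable N : NormedSpace.
Implicit Types x y : N.

Lemma lf_zero (f : N -> R) : linear_functional f -> f zero = 0.
Proof. intros [_ Hs]. rewrite <- (scal_0 zero), Hs. ring. Qed.

Lemma lf_sub (f : N -> R) x y : linear_functional f -> f (sub x y) = f x - f y.
Proof. intros [Ha Hs]. unfold sub. rewrite Ha, opp_scal, Hs. ring. Qed.

Definition unit_func (f : N -> R) := linear_functional f /\ forall x, Rabs (f x) <= norm x.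

Lemma dn_C (f : N -> R) : in_dual f -> exists C, forall x, norm x <= 1 -> Rabs (f x) <= C.
Proof.
  intros [_ [C HC]]. exists (Rabs C). intros x Hx. eapply Rle_trans; [apply HC|].
  pose proof (Rle_abs C). pose proof (Rabs_pos C). pose proof (norm_nonneg x).
  apply Rle_trans with (Rabs C * norm x). apply Rmult_le_compat_r; auto.
  rewrite <- (Rmult_1_r (Rabs C)) at 2. apply Rmult_le_compat_l; auto.
Qed.

Lemma dn_ub (f : N -> R) x : in_dual f -> norm x <= 1 -> Rabs (f x) <= dual_norm f.
Proof. intros Hf Hx. apply (sup_ub N (fun x => Rabs (f x))); auto. apply dn_C; auto. Qed.

Lemma dn_le (f : N -> R) c : in_dual f -> (forall x, norm x <= 1 -> Rabs (f x) <= c) -> dual_norm f <= c.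
Proof. intros Hf H. apply (sup_le N (fun x => Rabs (f x))); auto. apply dn_C; auto. Qed.

Lemma dn_nonneg (f : N -> R) : in_dual f -> 0 <= dual_norm f.
Proof. intros Hf. eapply Rle_trans; [apply (Rabs_pos (f zero))|]. apply dn_ub; auto. rewrite norm_zero; lra. Qed.

Lemma dn_bound (f : N -> R) x : in_dual f -> Rabs (f x) <= dual_norm f * norm x.
Proof.
  intros Hf. destruct (classic (x = zero)) as [->|Hx].
  - rewrite lf_zero, Rabs_R0, norm_zero. lra. apply Hf.
  - pose proof (norm_pos _ Hx).
    assert (H1 : Rabs (f (scal (/ norm x) x)) <= dual_norm f).
    { apply dn_ub; auto. rewrite norm_scal, Rabs_right. right; field; lra.
      apply Rle_ge; left; apply Rinv_0_lt_compat; auto. }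
    destruct Hf as [[_ Hs] _]. rewrite Hs, Rabs_mult, (Rabs_right (/ _)) in H1.
    2: { apply Rle_ge; left; apply Rinv_0_lt_compat; auto. }
    apply Rmult_le_compat_r with (r := norm x) in H1; [|lra].
    replace (/ norm x * Rabs (f x) * norm x) with (Rabs (f x)) in H1 by (field; lra). lra.
Qed.

Lemma unit_in_dual (f : N -> R) : unit_func f -> in_dual f.
Proof. intros [Hl Hb]. split; auto. exists 1. intro; rewrite Rmult_1_l; auto. Qed.

Lemma dn_unit (f : N -> R) : unit_func f -> dual_norm f <= 1.
Proof. intros Hf. apply dn_le. apply unit_in_dual; auto. intros x Hx. eapply Rle_trans; [apply Hf|]. auto. Qed.

Lemma in_dual_add (f g : N -> R) : in_dual f -> in_dual g -> in_dual (fun x => f x + g x).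
Proof.
  intros [[fa fs] [C1 H1]] [[ga gs] [C2 H2]]. split; [split|].
  - intros. rewrite fa, ga. ring.
  - intros. rewrite fs, gs. ring.
  - exists (C1 + C2). intro x. eapply Rle_trans; [apply Rabs_triang|]. specialize (H1 x). specialize (H2 x). lra.
Qed.

Lemma in_dual_scal (f : N -> R) a : in_dual f -> in_dual (fun x => a * f x).
Proof.
  intros [[fa fs] [C1 H1]]. split; [split|].
  - intros. rewrite fa. ring.
  - intros. rewrite fs. ring.
  - exists (Rabs a * C1). intro x. rewrite Rabs_mult, Rmult_assoc. apply Rmult_le_compat_l; auto. apply Rabs_pos.
Qed.

Lemma in_dual_zero : in_dual (fun _ : N => 0).
Proof. split; [split|]; intros; try ring. exists 0. intros. rewrite Rabs_R0. lra. Qed.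

Lemma dn_add (f g : N -> R) : in_dual f -> in_dual g -> dual_norm (fun x => f x + g x) <= dual_norm f + dual_norm g.
Proof.
  intros Hf Hg. apply dn_le. apply in_dual_add; auto. intros x Hx. eapply Rle_trans; [apply Rabs_triang|].
  apply Rplus_le_compat; apply dn_ub; auto.
Qed.

Lemma dn_scal (f : N -> R) a : in_dual f -> dual_norm (fun x => a * f x) = Rabs a * dual_norm f.
Proof.
  intros Hf. pose proof (Rabs_pos a). apply Rle_antisym.
  - apply dn_le. apply in_dual_scal; auto. intros x Hx. rewrite Rabs_mult.
    apply Rmult_le_compat_l; auto. apply dn_ub; auto.
  - destruct (Req_dec a 0) as [->|Ha].
    + rewrite Rabs_R0, Rmult_0_l. apply dn_nonneg. apply in_dual_scal; auto.
    + assert (0 < Rabs a) by (apply Rabs_pos_lt; auto).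
      apply Rmult_le_reg_l with (/ Rabs a). apply Rinv_0_lt_compat; auto.
      replace (/ Rabs a * (Rabs a * dual_norm f)) with (dual_norm f) by (field; lra).
      apply dn_le; auto. intros x Hx.
      assert (H1 := dn_ub (fun x => a * f x) x (in_dual_scal f a Hf) Hx). simpl in H1.
      rewrite Rabs_mult in H1. apply Rmult_le_reg_l with (Rabs a); auto.
      replace (Rabs a * (/ Rabs a * dual_norm (fun x => a * f x))) with (dual_norm (fun x => a * f x)) by (field; lra). auto.
Qed.

Lemma span_functional (V : VS) (v : V) c : (forall a b, vscal a v = vscal b v -> a = b) ->
  exists l, lin_on (fun (x : V) => exists a, x = vscal a v) l /\ forall a, l (vscal a v) = a * c.
Proof.
  intros Hinj.
  set (l := fun (x : V) => epsilon (inhabits 0) (fun r => exists a, x = vscal a v /\ r = a * c)).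
  assert (Hl : forall a, l (vscal a v) = a * c).
  { intro a. unfold l. assert (Hex : exists r, exists a', vscal a v = vscal a' v /\ r = a' * c) by (exists (a * c), a; auto).
    destruct (epsilon_spec (inhabits 0) _ Hex) as [a' [Ha' ->]]. apply Hinj in Ha'. subst; auto. }
  exists l. split; auto. split.
  - intros x y [a ->] [b ->]. rewrite vscal_combine, !Hl. ring.
  - intros b x [a ->]. rewrite vs_assoc, !Hl. ring.
Qed.

Lemma span_subsp (V : VS) (v : V) : subsp (fun (x : V) => exists a, x = vscal a v).
Proof.
  split; [|split].
  - exists 0. rewrite vs_zero_l. auto.
  - intros x y [a ->] [b ->]. exists (a + b). rewrite vscal_combine; auto.
  - intros b x [a ->]. exists (b * a). rewrite vs_assoc; auto.
Qed.

Lemma support_exists y : exists f, unit_func f /\ f y = norm y.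
Proof.
  destruct (classic (y = zero)) as [->|Hy].
  - exists (fun _ => 0). split. split. split; intros; ring. intros; rewrite Rabs_R0; apply norm_nonneg.
    rewrite norm_zero; auto.
  - pose proof (norm_pos _ Hy).
    assert (Hinj : forall a b, @vscal (VS_of N) a y = @vscal (VS_of N) b y -> a = b).
    { simpl. intros a b Hab. assert (Hz : norm (sub (scal a y) (scal b y)) = 0) by (rewrite Hab, sub_self, norm_zero; auto).
      rewrite scal_sub_l, norm_scal in Hz. apply Rmult_integral in Hz. destruct Hz as [Hz|Hz]; [|lra].
      revert Hz; unfold Rabs; destruct Rcase_abs; lra. }
    destruct (span_functional (VS_of N) y (norm y) Hinj) as [l [Hl Hlv]].
    destruct (hahn_banach (VS_of N) (fun _ => True) (@norm N)) with
      (M := fun x => exists a, x = @vscal (VS_of N) a y) (l := l) as [F [[Fa Fs] [FM Fp]]].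
    + split; auto.
    + intros; apply norm_triangle.
    + intros; simpl. rewrite norm_scal, Rabs_right; auto. lra.
    + apply span_subsp.
    + auto.
    + auto.
    + intros x [a ->]. rewrite Hlv. simpl. rewrite norm_scal. apply Rmult_le_compat_r. apply norm_nonneg. apply Rle_abs.
    + exists F. split; [split|].
      * split; intros; simpl in *. apply Fa; auto. apply Fs; auto.
      * intro x. apply Rabs_le_iff. split.
        -- assert (H1 := Fp (scal (-1) x) I). assert (H2 := Fs (-1) x I). simpl in H1, H2. rewrite H2, norm_scal in H1.
           replace (Rabs (-1)) with 1 in H1 by (unfold Rabs; destruct Rcase_abs; lra). lra.
        -- apply (Fp x I).
      * assert (H1 := FM (@vscal (VS_of N) 1 y) (ex_intro _ 1 eq_refl)).
        rewrite (Hlv 1) in H1. simpl in H1. rewrite scal_one in H1. rewrite H1. ring.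
Qed.

Lemma separation v : (forall f, unit_func f -> f v = 0) -> v = zero.
Proof.
  intros H. destruct (support_exists v) as [f [Hf Hfv]]. rewrite H in Hfv; auto.
  apply norm_eq_zero; auto.
Qed.

Lemma Un_cv_le (u : nat -> R) l c : Un_cv u l -> (forall n, u n <= c) -> l <= c.
Proof.
  intros Hu Hc. apply Rnot_lt_le. intro H. destruct (Hu (l - c)) as [K HK]. lra.
  specialize (HK K (le_n K)). specialize (Hc K). unfold Rdist in HK. apply Rabs_def2 in HK. lra.
Qed.

End DualLemmas.
Arguments lf_zero {N}. Arguments lf_sub {N}. Arguments unit_func {N}. Arguments dn_C {N}. Arguments dn_ub {N}.
Arguments dn_le {N}. Arguments dn_nonneg {N}. Arguments dn_bound {N}. Arguments unit_in_dual {N}. Arguments dn_unit {N}.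
Arguments in_dual_add {N}. Arguments in_dual_scal {N}. Arguments in_dual_zero {N}. Arguments dn_add {N}. Arguments dn_scal {N}.
Arguments support_exists {N}. Arguments separation {N}.

Open Scope R_scope.

Section Closure.
Variables X Y : NormedSpace.
Hypothesis HXr : reflexive X.

Lemma lim_func (g : Y -> R) (w : nat -> Y) y : in_dual g -> seq_converges w y -> Un_cv (fun n => g (w n)) (g y).
Proof.
  intros Hg Hw. destruct Hg as [Hl [C HC]]. apply (sc_func g C); auto. intros; apply lf_sub; auto.
Qed.

Lemma closure_lemma (T A : X -> Y) (u : nat -> X) y z :
  bounded_op X Y T -> bounded_op X Y A -> (forall n, norm (u n) <= 1) ->
  seq_converges (fun n => T (u n)) y -> seq_converges (fun n => A (u n)) z ->
  exists x, norm x <= 1 /\ T x = y /\ A x = z.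
Proof.
  intros HT HA Hu Hy Hz.
  set (M := fun f : X -> R => exists g h, in_dual g /\ in_dual h /\ f = (fun x => g (T x) + h (A x))).
  set (l := fun f : X -> R => epsilon (inhabits 0) (fun r => Un_cv (fun n => f (u n)) r)).
  assert (lM : forall g h, in_dual g -> in_dual h -> l (fun x => g (T x) + h (A x)) = g y + h z).
  { intros g h Hg Hh. unfold l.
    assert (Hc : Un_cv (fun n => g (T (u n)) + h (A (u n))) (g y + h z)).
    { apply CV_plus; apply lim_func; auto. }
    assert (Hex : exists r, Un_cv (fun n => g (T (u n)) + h (A (u n))) r) by (exists (g y + h z); auto).
    apply (UL_sequence _ _ _ (epsilon_spec (inhabits 0) _ Hex) Hc). }
  assert (lM' : forall g h f, in_dual g -> in_dual h -> (forall x, f x = g (T x) + h (A x)) -> l f = g y + h z).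
  { intros g h f Hg Hh Hf. replace f with (fun x => g (T x) + h (A x)). apply lM; auto.
    apply functional_extensionality. intro; rewrite Hf; auto. }
  assert (ME : forall f, M f -> in_dual f).
  { intros f [g [h [Hg [Hh ->]]]]. split; [split|].
    - intros a b. destruct HT as [[Ta _] _]. destruct HA as [[Aa _] _]. rewrite Ta, Aa.
      destruct Hg as [[ga _] _]. destruct Hh as [[ha _] _]. rewrite ga, ha. ring.
    - intros c a. destruct HT as [[_ Ts] _]. destruct HA as [[_ As] _]. rewrite Ts, As.
      destruct Hg as [[_ gs] _]. destruct Hh as [[_ hs] _]. rewrite gs, hs. ring.
    - exists (dual_norm g * op_norm T + dual_norm h * op_norm A). intro x.
      eapply Rle_trans; [apply Rabs_triang|].
      pose proof (dn_bound g (T x) Hg). pose proof (dn_bound h (A x) Hh).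
      pose proof (opn_bound X Y T x HT). pose proof (opn_bound X Y A x HA).
      pose proof (dn_nonneg g Hg). pose proof (dn_nonneg h Hh).
      assert (dual_norm g * norm (T x) <= dual_norm g * (op_norm T * norm x)) by (apply Rmult_le_compat_l; auto).
      assert (dual_norm h * norm (A x) <= dual_norm h * (op_norm A * norm x)) by (apply Rmult_le_compat_l; auto).
      nra. }
  destruct (hahn_banach (VS_fun X) in_dual dual_norm) with (M := M) (l := l) as [F [[Fa Fs] [FM Fp]]].
  - split; [|split].
    + apply in_dual_zero.
    + intros f g Hf Hg. apply in_dual_add; auto.
    + intros a f Hf. apply in_dual_scal; auto.
  - intros f g Hf Hg. apply dn_add; auto.
  - intros a f Ha Hf. simpl. rewrite dn_scal; auto. rewrite Rabs_right; auto. lra.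
  - split; [|split].
    + exists (fun _ => 0), (fun _ => 0). split; [apply in_dual_zero|split; [apply in_dual_zero|]].
      simpl. apply functional_extensionality. intro; ring.
    + intros f1 f2 [g1 [h1 [Hg1 [Hh1 ->]]]] [g2 [h2 [Hg2 [Hh2 ->]]]].
      exists (fun v => g1 v + g2 v), (fun v => h1 v + h2 v). split; [apply in_dual_add; auto|split; [apply in_dual_add; auto|]].
      simpl. apply functional_extensionality. intro; ring.
    + intros a f [g1 [h1 [Hg1 [Hh1 ->]]]].
      exists (fun v => a * g1 v), (fun v => a * h1 v). split; [apply in_dual_scal; auto|split; [apply in_dual_scal; auto|]].
      simpl. apply functional_extensionality. intro; ring.
  - exact ME.
  - split.
    + intros f1 f2 [g1 [h1 [Hg1 [Hh1 ->]]]] [g2 [h2 [Hg2 [Hh2 ->]]]].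
      rewrite (lM' (fun v => g1 v + g2 v) (fun v => h1 v + h2 v)); try apply in_dual_add; auto.
      rewrite !lM; auto. ring. intro; simpl; ring.
    + intros a f [g1 [h1 [Hg1 [Hh1 ->]]]].
      rewrite (lM' (fun v => a * g1 v) (fun v => a * h1 v)); try apply in_dual_scal; auto.
      rewrite !lM; auto. ring. intro; simpl; ring.
  - intros f Mf. unfold l. pose proof (ME f Mf) as Hf.
    destruct Mf as [g [h [Hg [Hh Hfe]]]].
    assert (Hex : exists r, Un_cv (fun n => f (u n)) r).
    { exists (g y + h z). rewrite Hfe. apply CV_plus; apply lim_func; auto. }
    apply (Un_cv_le _ _ _ (epsilon_spec (inhabits 0) _ Hex)).
    intro n. eapply Rle_trans; [apply Rle_abs|]. eapply Rle_trans; [apply dn_bound; auto|].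
    pose proof (dn_nonneg f Hf). specialize (Hu n). pose proof (norm_nonneg (u n)).
    rewrite <- (Rmult_1_r (dual_norm f)) at 2. apply Rmult_le_compat_l; auto.
  - destruct (HXr F) as [x Hx].
    + intros f g Hf Hg. apply (Fa f g Hf Hg).
    + intros a f Hf. apply (Fs a f Hf).
    + exists 1. intros f Hf. rewrite Rmult_1_l. apply Rabs_le_iff. split.
      * assert (H1 := Fp (fun x => -1 * f x) (in_dual_scal f (-1) Hf)).
        assert (H2 := Fs (-1) f Hf). simpl in H2. rewrite H2 in H1. rewrite dn_scal in H1; auto.
        replace (Rabs (-1)) with 1 in H1 by (unfold Rabs; destruct Rcase_abs; lra). lra.
      * apply Fp; auto.
    + assert (HgT : forall g, in_dual g -> F (fun x => g (T x)) = g y).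
      { intros g Hg. rewrite FM. rewrite (lM' g (fun _ => 0)); auto. ring. apply in_dual_zero.
        intro; ring. exists g, (fun _ => 0). split; auto. split. apply in_dual_zero.
        apply functional_extensionality. intro; ring. }
      assert (HgA : forall h, in_dual h -> F (fun x => h (A x)) = h z).
      { intros h Hh. rewrite FM. rewrite (lM' (fun _ => 0) h); auto. ring. apply in_dual_zero.
        intro; ring. exists (fun _ => 0), h. split. apply in_dual_zero. split; auto.
        apply functional_extensionality. intro; ring. }
      assert (Hcomp : forall (B : X -> Y) g, bounded_op X Y B -> in_dual g -> in_dual (fun x => g (B x))).
      { intros B g HB Hg. split; [split|].
        - intros a b. destruct HB as [[Ba _] _]. rewrite Ba. destruct Hg as [[ga _] _]. apply ga.
        - intros c a. destruct HB as [[_ Bs] _]. rewrite Bs. destruct Hg as [[_ gs] _]. apply gs.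
        - exists (dual_norm g * op_norm B). intro x0. eapply Rle_trans; [apply dn_bound; auto|].
          rewrite Rmult_assoc. apply Rmult_le_compat_l. apply dn_nonneg; auto. apply opn_bound; auto. }
      exists x. split; [|split].
      * destruct (support_exists x) as [k [Hk Hkx]]. rewrite <- Hkx, <- Hx.
        eapply Rle_trans; [apply Fp; apply unit_in_dual; auto|]. apply dn_unit; auto.
        apply unit_in_dual; auto.
      * apply sub_eq. apply separation. intros g Hg. rewrite lf_sub; [|apply Hg].
        rewrite <- (HgT g (unit_in_dual g Hg)). rewrite (Hx (fun x => g (T x))). ring.
        apply Hcomp; auto. apply unit_in_dual; auto.
      * apply sub_eq. apply separation. intros g Hg. rewrite lf_sub; [|apply Hg].
        rewrite <- (HgA g (unit_in_dual g Hg)). rewrite (Hx (fun x => g (A x))). ring.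
        apply Hcomp; auto. apply unit_in_dual; auto.
Qed.

End Closure.

Open Scope R_scope.

Section Gateaux.
Variable Y : NormedSpace.
Variable y0 : Y.
Hypothesis Hy0 : y0 <> zero.

Definition qd (v : Y) (s : R) := (norm (add y0 (scal s v)) - norm y0) / s.

Lemma qd_lower v s : 0 < s -> - norm v <= qd v s.
Proof.
  intro Hs. unfold qd. apply Rmult_le_reg_l with s; auto.
  replace (s * ((norm (add y0 (scal s v)) - norm y0) / s)) with (norm (add y0 (scal s v)) - norm y0) by (field; lra).
  pose proof (norm_triangle (add y0 (scal s v)) (scal (-s) v)).
  rewrite <- add_assoc, <- scal_add_l in H. replace (s + - s) with 0 in H by ring.
  rewrite scal_0, add_zero, norm_scal, Rabs_Ropp, Rabs_right in H by lra. lra.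
Qed.

Lemma qd_mono v s t : 0 < s -> s <= t -> qd v s <= qd v t.
Proof.
  intros Hs Hst. unfold qd.
  assert (Heq : add y0 (scal s v) = add (scal (1 - s / t) y0) (scal (s / t) (add y0 (scal t v)))).
  { rewrite scal_add_r, scal_assoc, add_assoc, <- scal_add_l.
    replace (1 - s / t + s / t) with 1 by ring. rewrite scal_one. f_equal. f_equal. field. lra. }
  assert (Hn : norm (add y0 (scal s v)) <= (1 - s / t) * norm y0 + s / t * norm (add y0 (scal t v))).
  { rewrite Heq. eapply Rle_trans; [apply norm_triangle|]. rewrite !norm_scal.
    rewrite !Rabs_right. lra. apply Rle_ge. apply Rmult_le_pos; [lra|]. left; apply Rinv_0_lt_compat; lra.
    apply Rle_ge. assert (s / t <= 1). { apply Rmult_le_reg_l with t. lra. field_simplify; lra. } lra. }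
  apply Rmult_le_reg_l with s; auto.
  replace (s * ((norm (add y0 (scal s v)) - norm y0) / s)) with (norm (add y0 (scal s v)) - norm y0) by (field; lra).
  replace (s * ((norm (add y0 (scal t v)) - norm y0) / t)) with (s / t * (norm (add y0 (scal t v)) - norm y0)) by (field; lra).
  lra.
Qed.

Definition Lq (v : Y) := epsilon (inhabits 0) (fun L => is_lub (fun r => exists s, 0 < s /\ r = - qd v s) L).
Definition pd (v : Y) := - Lq v.

Lemma Lq_lub v : is_lub (fun r => exists s, 0 < s /\ r = - qd v s) (Lq v).
Proof.
  unfold Lq. apply epsilon_spec. destruct (completeness (fun r => exists s, 0 < s /\ r = - qd v s)) as [L HL].
  - exists (norm v). intros r [s [Hs ->]]. pose proof (qd_lower v s Hs). lra.
  - exists (- qd v 1). exists 1. split; auto. lra.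
  - exists L; auto.
Qed.

Lemma pd_le v s : 0 < s -> pd v <= qd v s.
Proof. intros Hs. unfold pd. assert (- qd v s <= Lq v) by (apply Lq_lub; exists s; auto). lra. Qed.

Lemma pd_approx v eps : 0 < eps -> exists s, 0 < s /\ qd v s < pd v + eps.
Proof.
  intros He. apply NNPP. intro Hn.
  assert (Lq v <= Lq v - eps).
  { apply Lq_lub. intros r [s [Hs ->]]. apply Rnot_lt_le. intro H. apply Hn. exists s. split; auto.
    unfold pd. lra. }
  lra.
Qed.

Lemma qd_zero s : 0 < s -> qd zero s = 0.
Proof. intros Hs. unfold qd. rewrite scal_zero, add_zero. field. lra. Qed.

Lemma pd_zero : pd zero = 0.
Proof.
  apply Rle_antisym.
  - rewrite <- (qd_zero 1) by lra. apply pd_le; lra.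
  - apply Rnot_lt_le. intro H. destruct (pd_approx zero (- pd zero)) as [s [Hs Hq]]. lra.
    rewrite qd_zero in Hq; auto. lra.
Qed.

Lemma qd_scal a v s : 0 < a -> 0 < s -> qd (scal a v) s = a * qd v (s * a).
Proof.
  intros Ha Hs. unfold qd. rewrite scal_assoc. field. lra.
Qed.

Lemma pd_pos a v : 0 <= a -> pd (scal a v) = a * pd v.
Proof.
  intros [Ha|<-].
  2: { rewrite scal_0, pd_zero. ring. }
  apply Rle_antisym.
  - apply Rnot_lt_le. intro H. destruct (pd_approx v ((pd (scal a v) - a * pd v) / a)) as [s [Hs Hq]].
    apply Rdiv_lt_0_compat; lra.
    assert (H1 := pd_le (scal a v) (s / a) ltac:(apply Rdiv_lt_0_compat; lra)).
    rewrite qd_scal in H1 by (try apply Rdiv_lt_0_compat; lra).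
    replace (s / a * a) with s in H1 by (field; lra).
    apply Rmult_lt_compat_l with (r := a) in Hq; auto.
    replace (a * (pd v + (pd (scal a v) - a * pd v) / a)) with (pd (scal a v)) in Hq by (field; lra). lra.
  - apply Rnot_lt_le. intro H. destruct (pd_approx (scal a v) (a * pd v - pd (scal a v))) as [s [Hs Hq]]. lra.
    rewrite qd_scal in Hq by lra.
    assert (H1 := pd_le v (s * a) ltac:(apply Rmult_lt_0_compat; lra)).
    apply Rmult_le_compat_l with (r := a) in H1; lra.
Qed.

Lemma qd_sub v w s : 0 < s -> qd (add v w) s <= qd v (2 * s) + qd w (2 * s).
Proof.
  intros Hs. unfold qd.
  assert (Heq : add y0 (scal s (add v w)) = add (scal (/ 2) (add y0 (scal (2 * s) v))) (scal (/ 2) (add y0 (scal (2 * s) w)))).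
  { rewrite !scal_add_r, !scal_assoc. rewrite add_swap4. rewrite <- scal_add_l.
    replace (/ 2 + / 2) with 1 by field. rewrite scal_one. f_equal.
    replace (/ 2 * (2 * s)) with s by field. auto. }
  rewrite Heq.
  assert (Hn := norm_triangle (scal (/ 2) (add y0 (scal (2 * s) v))) (scal (/ 2) (add y0 (scal (2 * s) w)))).
  rewrite !norm_scal, Rabs_right in Hn by lra.
  apply Rmult_le_reg_l with s; auto.
  replace (s * ((norm (add (scal (/ 2) (add y0 (scal (2 * s) v))) (scal (/ 2) (add y0 (scal (2 * s) w)))) - norm y0) / s))
    with (norm (add (scal (/ 2) (add y0 (scal (2 * s) v))) (scal (/ 2) (add y0 (scal (2 * s) w)))) - norm y0) by (field; lra).
  replace (s * ((norm (add y0 (scal (2 * s) v)) - norm y0) / (2 * s) + (norm (add y0 (scal (2 * s) w)) - norm y0) / (2 * s)))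
    with (/ 2 * norm (add y0 (scal (2 * s) v)) + / 2 * norm (add y0 (scal (2 * s) w)) - norm y0) by (field; lra).
  lra.
Qed.

Lemma pd_sub v w : pd (add v w) <= pd v + pd w.
Proof.
  apply Rnot_lt_le. intro H. set (e := (pd (add v w) - pd v - pd w) / 2).
  destruct (pd_approx v e) as [s1 [Hs1 Hq1]]. unfold e; lra.
  destruct (pd_approx w e) as [s2 [Hs2 Hq2]]. unfold e; lra.
  set (s := Rmin s1 s2 / 2).
  assert (0 < s) by (unfold s, Rmin; destruct Rle_dec; lra).
  assert (2 * s <= s1) by (unfold s; pose proof (Rmin_l s1 s2); lra).
  assert (2 * s <= s2) by (unfold s; pose proof (Rmin_r s1 s2); lra).
  pose proof (pd_le (add v w) s H0). pose proof (qd_sub v w s H0).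
  pose proof (qd_mono v (2 * s) s1 ltac:(lra) H1). pose proof (qd_mono w (2 * s) s2 ltac:(lra) H2).
  unfold e in *. lra.
Qed.

Lemma pd_opp_sum v : 0 <= pd v + pd (scal (-1) v).
Proof.
  pose proof (pd_sub v (scal (-1) v)). rewrite <- opp_scal, add_opp, pd_zero, opp_scal in H. lra.
Qed.

(* the main lemma: at a smooth point the right derivative equals the support functional *)
Lemma gateaux (f : Y -> R) : unit_func f -> f y0 = norm y0 ->
  (forall g, unit_func g -> g y0 = norm y0 -> forall v, g v = f v) ->
  forall v eps, 0 < eps -> exists s, 0 < s /\ norm (add y0 (scal s v)) - norm y0 <= s * (f v + eps).
Proof.
  intros Hf Hfy Huniq v eps He.
  assert (Hpv : pd v = f v).
  { destruct (classic (v = zero)) as [->|Hv].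
    - rewrite pd_zero, lf_zero; auto. apply Hf.
    - pose proof (norm_pos _ Hv).
      assert (Hinj : forall a b, @vscal (VS_of Y) a v = @vscal (VS_of Y) b v -> a = b).
      { simpl. intros a b Hab. assert (Hz : norm (sub (scal a v) (scal b v)) = 0) by (rewrite Hab, sub_self, norm_zero; auto).
        rewrite scal_sub_l, norm_scal in Hz. apply Rmult_integral in Hz. destruct Hz as [Hz|Hz]; [|lra].
        revert Hz; unfold Rabs; destruct Rcase_abs; lra. }
      destruct (span_functional (VS_of Y) v (pd v) Hinj) as [l [Hl Hlv]].
      destruct (hahn_banach (VS_of Y) (fun _ => True) pd) with
        (M := fun x => exists a, x = @vscal (VS_of Y) a v) (l := l) as [F [[Fa Fs] [FM Fp]]].
      + split; auto.
      + intros; apply pd_sub.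
      + intros; simpl. apply pd_pos; auto.
      + apply span_subsp.
      + auto.
      + auto.
      + intros x [a ->]. rewrite Hlv. simpl. destruct (Rle_dec 0 a) as [Ha|Ha].
        * rewrite pd_pos; auto. lra.
        * replace (scal a v) with (scal (- a) (scal (-1) v)) by (rewrite scal_assoc; f_equal; ring).
          rewrite pd_pos by lra. pose proof (pd_opp_sum v).
          apply Rmult_le_compat_l with (r := - a) in H0; lra.
      + assert (FU : unit_func F).
        { split. split; intros; simpl in *. apply Fa; auto. apply Fs; auto.
          assert (Fle : forall x, F x <= norm x).
          { intro x. eapply Rle_trans. apply (Fp x I). eapply Rle_trans. apply (pd_le x 1); lra.
            unfold qd. pose proof (norm_triangle y0 (scal 1 x)). rewrite scal_one in *. lra. }
          intro x. apply Rabs_le_iff. split; auto.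
          assert (H1 := Fle (scal (-1) x)). assert (H2 := Fs (-1) x I). simpl in H2. rewrite H2, norm_scal in H1.
          replace (Rabs (-1)) with 1 in H1 by (unfold Rabs; destruct Rcase_abs; lra). lra. }
        assert (Fy : F y0 = norm y0).
        { apply Rle_antisym. destruct FU as [_ FU]. specialize (FU y0). apply Rabs_le_iff in FU. lra.
          assert (H1 := Fp (scal (-1) y0) I). assert (H2 := Fs (-1) y0 I). simpl in H2. rewrite H2 in H1.
          assert (H3 := pd_le (scal (-1) y0) (/ 2) ltac:(lra)). unfold qd in H3.
          rewrite scal_assoc in H3. replace (add y0 (scal (/ 2 * -1) y0)) with (scal (/ 2) y0) in H3 by (rewrite <- (scal_one y0) at 2; rewrite <- scal_add_l; f_equal; field).
          rewrite norm_scal in H3.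
          rewrite Rabs_right in H3 by lra. replace ((/ 2 * norm y0 - norm y0) / / 2) with (- norm y0) in H3 by field.
          lra. }
        rewrite <- (Huniq F FU Fy v).
        assert (H1 := FM (@vscal (VS_of Y) 1 v) (ex_intro _ 1 eq_refl)). rewrite (Hlv 1) in H1.
        simpl in H1. rewrite scal_one in H1. rewrite H1. ring. }
  destruct (pd_approx v eps He) as [s [Hs Hq]]. exists s. split; auto.
  unfold qd in Hq. rewrite Hpv in Hq.
  apply Rmult_lt_compat_l with (r := s) in Hq; auto.
  replace (s * ((norm (add y0 (scal s v)) - norm y0) / s)) with (norm (add y0 (scal s v)) - norm y0) in Hq by (field; lra).
  lra.
Qed.

End Gateaux.

Open Scope R_scope.

Lemma unit_bound {N : NormedSpace} (k : N -> R) x : unit_func k -> Rabs (k x) <= norm x.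
Proof. intros [_ H]; auto. Qed.

Lemma unit_lin {N : NormedSpace} (k : N -> R) a x y : unit_func k -> k (add x (scal a y)) = k x + a * k y.
Proof. intros [[Ha Hs] _]. rewrite Ha, Hs. auto. Qed.

Lemma unit_scal {N : NormedSpace} (k : N -> R) a x : unit_func k -> k (scal a x) = a * k x.
Proof. intros [[Ha Hs] _]. rewrite Hs. auto. Qed.

Section Smulian.
Variable Y : NormedSpace.
Variable y0 : Y.
Hypothesis Hy0 : y0 <> zero.
Variable f : Y -> R.
Hypothesis Hf : unit_func f.
Hypothesis Hfy : f y0 = norm y0.
Hypothesis Huniq : forall g, unit_func g -> g y0 = norm y0 -> forall v, g v = f v.

Lemma smulian (k : nat -> Y -> R) : (forall n, unit_func (k n)) ->
  Un_cv (fun n => k n y0) (norm y0) -> forall v, Un_cv (fun n => k n v) (f v).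
Proof.
  intros Hk Hc v eps He. set (e := eps / 3).
  destruct (gateaux Y y0 f Hf Hfy Huniq v e) as [s1 [Hs1 H1]]. unfold e; lra.
  destruct (gateaux Y y0 f Hf Hfy Huniq (scal (-1) v) e) as [s2 [Hs2 H2]]. unfold e; lra.
  rewrite (unit_scal f) in H2; auto.
  set (m := Rmin s1 s2). assert (Hm : 0 < m) by (unfold m, Rmin; destruct Rle_dec; lra).
  destruct (Hc (m * e)) as [K HK]. apply Rmult_lt_0_compat; unfold e; lra.
  exists K. intros n Hn. specialize (HK n Hn). unfold Rdist in *. apply Rabs_def2 in HK.
  pose proof (Rmin_l s1 s2). pose proof (Rmin_r s1 s2). fold m in H, H0.
  assert (A1 : k n (add y0 (scal s1 v)) <= norm (add y0 (scal s1 v))).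
  { pose proof (unit_bound (k n) (add y0 (scal s1 v)) (Hk n)). apply Rabs_le_iff in H3. lra. }
  assert (A2 : k n (add y0 (scal s2 (scal (-1) v))) <= norm (add y0 (scal s2 (scal (-1) v)))).
  { pose proof (unit_bound (k n) (add y0 (scal s2 (scal (-1) v))) (Hk n)). apply Rabs_le_iff in H3. lra. }
  rewrite unit_lin in A1, A2; auto. rewrite unit_scal in A2; auto.
  assert (m * e <= s1 * e) by (apply Rmult_le_compat_r; unfold e; lra).
  assert (m * e <= s2 * e) by (apply Rmult_le_compat_r; unfold e; lra).
  assert (B1 : s1 * k n v <= s1 * (f v + 2 * e)) by lra.
  assert (B2 : s2 * (- k n v) <= s2 * (- f v + 2 * e)) by lra.
  apply Rmult_le_reg_l in B1; auto. apply Rmult_le_reg_l in B2; auto.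
  apply Rabs_def1; unfold e in *; lra.
Qed.

Lemma smulian2 (k : nat -> Y -> R) (w : nat -> Y) (wl : Y) : (forall n, unit_func (k n)) ->
  Un_cv (fun n => k n y0) (norm y0) -> seq_converges w wl -> Un_cv (fun n => k n (w n)) (f wl).
Proof.
  intros Hk Hc Hw eps He. destruct (smulian k Hk Hc wl (eps / 2)) as [K1 HK1]. lra.
  destruct (Hw (eps / 2)) as [K2 HK2]. lra.
  exists (max K1 K2). intros n Hn. pose proof (Nat.le_max_l K1 K2). pose proof (Nat.le_max_r K1 K2).
  specialize (HK1 n ltac:(lia)). specialize (HK2 n ltac:(lia)). unfold Rdist in *.
  pose proof (unit_bound (k n) (sub (w n) wl) (Hk n)). rewrite lf_sub in H1 by apply Hk.
  replace (k n (w n) - f wl) with ((k n (w n) - k n wl) + (k n wl - f wl)) by ring.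
  eapply Rle_lt_trans; [apply Rabs_triang|]. lra.
Qed.

End Smulian.

Section SIP.
Variable Y : NormedSpace.
Variable y0 : Y.
Hypothesis Hy0 : y0 <> zero.
Variable g : Y -> R.
Hypothesis Hg : unit_func g.
Hypothesis Hgy : g y0 = norm y0.

Lemma scal_m1_inv (u : Y) : scal (-1) (scal (-1) u) = u.
Proof. rewrite scal_assoc. replace (-1 * -1) with 1 by ring. apply scal_one. Qed.

Lemma neq_neg (u : Y) : u <> zero -> u <> scal (-1) u.
Proof.
  intros Hu E. apply Hu. assert (H : norm (sub u (scal (-1) u)) = 0) by (rewrite <- E, sub_self, norm_zero; auto).
  rewrite <- (scal_one u) in H at 1. rewrite scal_sub_l, norm_scal in H. replace (1 - -1) with 2 in H by ring.
  rewrite Rabs_right in H by lra. apply norm_eq_zero. lra.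
Qed.

Definition u0 := scal (/ norm y0) y0.
Definition pairP (u : Y) := fun z => z = u \/ z = scal (-1) u.
Definition rr (u : Y) : Y :=
  if excluded_middle_informative (u = u0 \/ u = scal (-1) u0) then u0 else epsilon (inhabits zero) (pairP u).
Definition HH (w : Y) : Y -> R :=
  if excluded_middle_informative (w = u0) then g
  else epsilon (inhabits (fun _ => 0)) (fun h => unit_func h /\ h w = norm w).
Definition GG (u : Y) (x : Y) : R :=
  if excluded_middle_informative (u = rr u) then HH (rr u) x else - HH (rr u) x.
Definition sipc (x y : Y) : R :=
  if excluded_middle_informative (y = zero) then 0 else norm y * GG (scal (/ norm y) y) x.

Lemma HH_spec w : unit_func (HH w) /\ HH w w = norm w.
Proof.
  unfold HH. destruct excluded_middle_informative as [E|E].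
  - subst w. split; auto. unfold u0. rewrite (unit_scal g); auto. rewrite Hgy, norm_scal.
    pose proof (norm_pos _ Hy0). rewrite Rabs_right. auto. apply Rle_ge; left; apply Rinv_0_lt_compat; auto.
  - apply epsilon_spec. apply support_exists.
Qed.

Lemma rr_spec u : rr u = u \/ rr u = scal (-1) u.
Proof.
  unfold rr. destruct excluded_middle_informative as [[E|E]|E].
  - left; auto.
  - right. rewrite E, scal_m1_inv. auto.
  - apply (epsilon_spec (inhabits zero) (pairP u)). exists u. left; auto.
Qed.

Lemma rr_neg u : rr (scal (-1) u) = rr u.
Proof.
  unfold rr. assert (Hiff : (scal (-1) u = u0 \/ scal (-1) u = scal (-1) u0) <-> (u = u0 \/ u = scal (-1) u0)).
  { split; intros [E|E].
    - right. rewrite <- E, scal_m1_inv. auto.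
    - left. rewrite <- (scal_m1_inv u), E, scal_m1_inv. auto.
    - right. rewrite E. auto.
    - left. rewrite E, scal_m1_inv. auto. }
  destruct excluded_middle_informative as [E1|E1]; destruct excluded_middle_informative as [E2|E2]; try tauto.
  assert (pairP (scal (-1) u) = pairP u).
  { apply functional_extensionality. intro z. apply propositional_extensionality. unfold pairP.
    rewrite scal_m1_inv. tauto. }
  rewrite H. auto.
Qed.

Lemma GG_unit u : unit_func (GG u).
Proof.
  unfold GG. destruct excluded_middle_informative. apply HH_spec.
  destruct (HH_spec (rr u)) as [[[Ha Hs] Hb] _]. split; [split|].
  - intros. rewrite Ha. ring.
  - intros. rewrite Hs. ring.
  - intros. rewrite Rabs_Ropp. auto.
Qed.

Lemma GG_self u : GG u u = norm u.
Proof.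
  unfold GG. destruct excluded_middle_informative as [E|E].
  - transitivity (HH (rr u) (rr u)). f_equal; auto. rewrite (proj2 (HH_spec _)), <- E. auto.
  - destruct (rr_spec u) as [E'|E']. congruence.
    assert (Hu : u = scal (-1) (rr u)) by (rewrite E', scal_m1_inv; auto).
    rewrite Hu at 2. rewrite (unit_scal (HH (rr u))) by apply HH_spec. rewrite (proj2 (HH_spec _)).
    rewrite E', norm_scal. replace (Rabs (-1)) with 1 by (unfold Rabs; destruct Rcase_abs; lra). ring.
Qed.

Lemma GG_neg u x : u <> zero -> GG (scal (-1) u) x = - GG u x.
Proof.
  intros Hu. pose proof (neq_neg u Hu) as Hn. unfold GG. rewrite rr_neg.
  destruct (rr_spec u) as [E|E];
  destruct excluded_middle_informative as [E1|E1]; destruct excluded_middle_informative as [E2|E2];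
  first [ring | (exfalso; apply Hn; congruence) | congruence].
Qed.

Lemma sip_exists : exists s, compatible_sip s /\ forall v, s v y0 = norm y0 * g v.
Proof.
  exists sipc.
  assert (Self : forall x, sipc x x = norm x ^ 2).
  { intros x. unfold sipc. destruct excluded_middle_informative as [E|E].
    - subst. rewrite norm_zero. ring.
    - pose proof (norm_pos _ E).
      replace (GG (scal (/ norm x) x) x) with (norm x * GG (scal (/ norm x) x) (scal (/ norm x) x)).
      2: { rewrite (unit_scal (GG _)) by apply GG_unit. field. lra. }
      rewrite GG_self, norm_scal, Rabs_right. field. lra. apply Rle_ge; left; apply Rinv_0_lt_compat; auto. }
  assert (Bd : forall x y, Rabs (sipc x y) <= norm y * norm x).
  { intros x y. unfold sipc. destruct excluded_middle_informative.
    - rewrite Rabs_R0. apply Rmult_le_pos; apply norm_nonneg.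
    - rewrite Rabs_mult, Rabs_right by (apply Rle_ge, norm_nonneg). apply Rmult_le_compat_l. apply norm_nonneg.
      apply unit_bound, GG_unit. }
  split; [split; [|split; [|split; [|split; [|split]]]]|].
  - intros x y z. unfold sipc. destruct excluded_middle_informative. ring.
    rewrite (proj1 (proj1 (GG_unit _))). ring.
  - intros a x y. unfold sipc. destruct excluded_middle_informative. ring.
    rewrite (proj2 (proj1 (GG_unit _))). ring.
  - intros x Hx. rewrite Self. pose proof (norm_pos _ Hx). nra.
  - intros x y. rewrite !Self. pose proof (Bd x y). pose proof (norm_nonneg x). pose proof (norm_nonneg y).
    assert (sipc x y ^ 2 = Rabs (sipc x y) ^ 2) by (unfold Rabs; destruct Rcase_abs; ring).
    rewrite H2. assert (0 <= Rabs (sipc x y)) by apply Rabs_pos. nra.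
  - intros a x y. unfold sipc.
    destruct (classic (y = zero)) as [Ey|Ey].
    { subst. rewrite scal_zero. destruct excluded_middle_informative; [ring|congruence]. }
    destruct (Req_dec a 0) as [Ea|Ea].
    { subst. rewrite scal_0. destruct excluded_middle_informative; [ring|congruence]. }
    assert (Eay : scal a y <> zero).
    { intro Z. apply Ey. rewrite <- (scal_one y). replace 1 with (/ a * a) by (field; auto).
      rewrite <- scal_assoc, Z, scal_zero. auto. }
    destruct excluded_middle_informative as [E1|E1]; [congruence|].
    destruct excluded_middle_informative as [E2|E2]; [congruence|].
    pose proof (norm_pos _ Ey). rewrite norm_scal, scal_assoc.
    assert (Hu : scal (/ norm y) y <> zero).
    { intro Z. apply Ey. rewrite <- (scal_one y). replace 1 with (norm y * / norm y) by (field; lra).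
      rewrite <- scal_assoc, Z, scal_zero. auto. }
    destruct (Rle_dec 0 a) as [Ha|Ha].
    + rewrite Rabs_right by lra. replace (/ (a * norm y) * a) with (/ norm y) by (field; lra). ring.
    + rewrite Rabs_left by lra. replace (/ (- a * norm y) * a) with (-1 * / norm y) by (field; lra).
      rewrite <- scal_assoc, GG_neg; auto. ring.
  - intro x. apply Self.
  - intro v. unfold sipc. destruct excluded_middle_informative as [E|E]; [congruence|].
    fold u0. unfold GG. assert (Hr : rr u0 = u0).
    { unfold rr. destruct excluded_middle_informative as [_|E']; auto. exfalso; apply E'; left; auto. }
    rewrite Hr. destruct excluded_middle_informative as [_|E']; [|congruence].
    unfold HH. destruct excluded_middle_informative as [_|E']; [auto|congruence].
Qed.

End SIP.

Lemma sip_exists_any (Y : NormedSpace) (y0 : Y) : y0 <> zero -> exists s : Y -> Y -> R, compatible_sip s.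
Proof.
  intros Hy. destruct (support_exists y0) as [g [Hg Hgy]].
  destruct (sip_exists Y y0 Hy g Hg Hgy) as [s [Hs _]]. exists s; auto.
Qed.

Open Scope R_scope.

Section Quot.
Variable X : NormedSpace.
Variable x0 : X.

Definition dset (x : X) := fun r => exists a, r = - norm (sub x (scal a x0)).
Definition Ld (x : X) := epsilon (inhabits 0) (fun L => is_lub (dset x) L).
Definition pq (x : X) := - Ld x.

Lemma Ld_lub x : is_lub (dset x) (Ld x).
Proof.
  unfold Ld. apply epsilon_spec. destruct (completeness (dset x)) as [L HL].
  - exists 0. intros r [a ->]. pose proof (norm_nonneg (sub x (scal a x0))). lra.
  - exists (- norm (sub x (scal 0 x0))). exists 0. auto.
  - exists L; auto.
Qed.

Lemma pq_le x a : pq x <= norm (sub x (scal a x0)).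
Proof. unfold pq. assert (- norm (sub x (scal a x0)) <= Ld x) by (apply Ld_lub; exists a; auto). lra. Qed.

Lemma pq_nonneg x : 0 <= pq x.
Proof. unfold pq. assert (Ld x <= 0). { apply Ld_lub. intros r [a ->]. pose proof (norm_nonneg (sub x (scal a x0))). lra. } lra. Qed.

Lemma pq_approx x eps : 0 < eps -> exists a, norm (sub x (scal a x0)) < pq x + eps.
Proof.
  intros He. apply NNPP. intro Hn.
  assert (Ld x <= Ld x - eps).
  { apply Ld_lub. intros r [a ->]. apply Rnot_lt_le. intro H. apply Hn. exists a. unfold pq. lra. }
  lra.
Qed.

Lemma pq_sub x y : pq (add x y) <= pq x + pq y.
Proof.
  apply Rnot_lt_le. intro H. set (e := (pq (add x y) - pq x - pq y) / 2).
  destruct (pq_approx x e) as [a Ha]. unfold e; lra.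
  destruct (pq_approx y e) as [b Hb]. unfold e; lra.
  pose proof (pq_le (add x y) (a + b)).
  rewrite scal_add_l, sub_add_add in H0. pose proof (norm_triangle (sub x (scal a x0)) (sub y (scal b x0))).
  unfold e in *. lra.
Qed.

Lemma pq_pos c x : 0 <= c -> pq (scal c x) = c * pq x.
Proof.
  intros [Hc|<-].
  2: { rewrite scal_0. apply Rle_antisym. pose proof (pq_le zero 0). rewrite scal_0, sub_self, norm_zero in H. lra.
       pose proof (pq_nonneg zero). lra. }
  apply Rle_antisym.
  - apply Rnot_lt_le. intro H. destruct (pq_approx x ((pq (scal c x) - c * pq x) / c)) as [a Ha].
    apply Rdiv_lt_0_compat; lra.
    pose proof (pq_le (scal c x) (c * a)). rewrite <- scal_assoc, sub_scal, norm_scal, Rabs_right in H0 by lra.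
    apply Rmult_lt_compat_l with (r := c) in Ha; auto.
    replace (c * (pq x + (pq (scal c x) - c * pq x) / c)) with (pq (scal c x)) in Ha by (field; lra). lra.
  - apply Rnot_lt_le. intro H. destruct (pq_approx (scal c x) (c * pq x - pq (scal c x))) as [a Ha]. lra.
    pose proof (pq_le x (a / c)).
    replace (scal a x0) with (scal c (scal (a / c) x0)) in Ha by (rewrite scal_assoc; f_equal; field; lra).
    rewrite sub_scal, norm_scal, Rabs_right in Ha by lra.
    apply Rmult_le_compat_l with (r := c) in H0; lra.
Qed.

Lemma quot_functional x1 : norm x0 = 1 -> norm x1 = 1 -> x1 <> x0 -> x1 <> scal (-1) x0 ->
  exists h, unit_func h /\ h x0 = 0 /\ h x1 <> 0.
Proof.
  intros N0 N1 D1 D2.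
  assert (Hp1 : 0 < pq x1).
  { destruct (pq_nonneg x1) as [H|H]; auto. exfalso.
    assert (P1 : 0 < norm (sub x1 x0)). { apply norm_pos. intro E. apply D1, sub_eq; auto. }
    assert (P2 : 0 < norm (sub x1 (scal (-1) x0))). { apply norm_pos. intro E. apply D2, sub_eq; auto. }
    set (d := Rmin (norm (sub x1 x0)) (norm (sub x1 (scal (-1) x0)))).
    assert (Hd : 0 < d) by (unfold d, Rmin; destruct Rle_dec; lra).
    destruct (pq_approx x1 (d / 3)) as [a Ha]. lra. rewrite <- H in Ha.
    pose proof (Rmin_l (norm (sub x1 x0)) (norm (sub x1 (scal (-1) x0)))).
    pose proof (Rmin_r (norm (sub x1 x0)) (norm (sub x1 (scal (-1) x0)))). fold d in H0, H1.
    pose proof (norm_rev x1 (scal a x0)) as Hr. rewrite N1, norm_scal, N0, Rmult_1_r in Hr.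
    set (sg := if Rle_dec 0 a then 1 else -1).
    assert (Hsg : Rabs (a - sg) <= Rabs (1 - Rabs a)).
    { unfold sg. destruct Rle_dec; unfold Rabs; repeat destruct Rcase_abs; lra. }
    pose proof (norm_sub_triangle x1 (scal a x0) (scal sg x0)).
    rewrite scal_sub_l, norm_scal, N0, Rmult_1_r in H2.
    assert (norm (sub x1 (scal sg x0)) < d) by lra.
    unfold sg in H3. destruct Rle_dec.
    - rewrite scal_one in H3. lra.
    - lra. }
  assert (Hinj : forall a b, @vscal (VS_of X) a x1 = @vscal (VS_of X) b x1 -> a = b).
  { simpl. intros a b Hab. assert (Hz : norm (sub (scal a x1) (scal b x1)) = 0) by (rewrite Hab, sub_self, norm_zero; auto).
    rewrite scal_sub_l, norm_scal, N1 in Hz. revert Hz; unfold Rabs; destruct Rcase_abs; lra. }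
  destruct (span_functional (VS_of X) x1 (pq x1) Hinj) as [l [Hl Hlv]].
  destruct (hahn_banach (VS_of X) (fun _ => True) pq) with
    (M := fun x => exists a, x = @vscal (VS_of X) a x1) (l := l) as [F [[Fa Fs] [FM Fp]]].
  + split; auto.
  + intros; apply pq_sub.
  + intros; simpl. apply pq_pos; auto.
  + apply span_subsp.
  + auto.
  + auto.
  + intros x [a ->]. rewrite Hlv. simpl. destruct (Rle_dec 0 a).
    * rewrite pq_pos; auto. lra.
    * pose proof (pq_nonneg (scal a x1)). pose proof (Rlt_le _ _ Hp1). nra.
  + assert (FU : unit_func F).
    { split. split; intros; simpl in *. apply Fa; auto. apply Fs; auto.
      assert (Fle : forall x, F x <= norm x).
      { intro x. eapply Rle_trans. apply (Fp x I). pose proof (pq_le x 0). rewrite scal_0 in H.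
        unfold sub in H. rewrite opp_scal, scal_zero, add_zero in H. auto. }
      intro x. apply Rabs_le_iff. split; auto.
      assert (H1 := Fle (scal (-1) x)). assert (H2 := Fs (-1) x I). simpl in H2. rewrite H2, norm_scal in H1.
      replace (Rabs (-1)) with 1 in H1 by (unfold Rabs; destruct Rcase_abs; lra). lra. }
    exists F. split; auto. split.
    * apply Rle_antisym.
      -- eapply Rle_trans. apply (Fp x0 I). pose proof (pq_le x0 1). rewrite scal_one, sub_self, norm_zero in H. auto.
      -- assert (H1 := Fp (scal (-1) x0) I). assert (H2 := Fs (-1) x0 I). simpl in H2. rewrite H2 in H1.
         pose proof (pq_le (scal (-1) x0) (-1)). rewrite sub_self, norm_zero in H. lra.
    * assert (H1 := FM (@vscal (VS_of X) 1 x1) (ex_intro _ 1 eq_refl)). rewrite (Hlv 1) in H1.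
      simpl in H1. rewrite scal_one in H1. rewrite H1. lra.
Qed.

End Quot.

Open Scope R_scope.

Lemma Un_cv_ge (u : nat -> R) l c : Un_cv u l -> (forall n, c <= u n) -> c <= l.
Proof.
  intros Hu Hc. apply Rnot_lt_le. intro H. destruct (Hu (c - l)) as [K HK]. lra.
  specialize (HK K (le_n K)). specialize (Hc K). unfold Rdist in HK. apply Rabs_def2 in HK. lra.
Qed.

Lemma Un_cv_squeeze (u e : nat -> R) l : Un_cv e 0 -> (forall n, Rabs (u n - l) <= e n) -> Un_cv u l.
Proof.
  intros He Hb eps Heps. destruct (He eps Heps) as [K HK]. exists K. intros n Hn.
  specialize (HK n Hn). unfold Rdist in *. rewrite Rminus_0_r in HK. specialize (Hb n).
  pose proof (Rle_abs (e n)). lra.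
Qed.

Lemma Un_cv_invS : Un_cv (fun n => / INR (S n)) 0.
Proof.
  intros eps He. destruct (INR_unbounded (/ eps)) as [K HK]. exists K. intros n Hn.
  unfold Rdist. rewrite Rminus_0_r. assert (0 < INR (S n)) by (apply lt_0_INR; lia).
  rewrite Rabs_right by (apply Rle_ge; left; apply Rinv_0_lt_compat; auto).
  assert (INR K <= INR (S n)) by (apply le_INR; lia).
  assert (0 < / eps) by (apply Rinv_0_lt_compat; auto).
  replace eps with (/ / eps) by (field; lra). apply Rinv_lt_contravar; nra.
Qed.

Lemma Un_cv_const_mult (u : nat -> R) l c : Un_cv u l -> Un_cv (fun n => c * u n) (c * l).
Proof. intros H. apply CV_mult; auto. intros eps He. exists O. intros. unfold Rdist. rewrite Rminus_diag, Rabs_R0; auto. Qed.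

Lemma sc_scal_l {N : NormedSpace} (a : nat -> R) c (y : N) : Un_cv a c -> seq_converges (fun n => scal (a n) y) (scal c y).
Proof.
  intros H eps He. destruct (H (eps / (norm y + 1))) as [K HK].
  { apply Rdiv_lt_0_compat; auto. pose proof (norm_nonneg y); lra. }
  exists K. intros n Hn. rewrite scal_sub_l, norm_scal. specialize (HK n Hn). unfold Rdist in HK.
  pose proof (norm_nonneg y). pose proof (Rabs_pos (a n - c)).
  apply Rle_lt_trans with (Rabs (a n - c) * (norm y + 1)). apply Rmult_le_compat_l; lra.
  apply Rmult_lt_compat_r with (r := norm y + 1) in HK; [|lra].
  replace (eps / (norm y + 1) * (norm y + 1)) with eps in HK by (field; lra). auto.
Qed.

Definition rank1 {X Y : NormedSpace} (h : X -> R) (y : Y) : X -> Y := fun x => scal (h x) y.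

Lemma rank1_compact {X Y : NormedSpace} (h : X -> R) (y : Y) : unit_func h -> compact_op (rank1 h y).
Proof.
  intros Hh. split; [split|].
  - intros a b. unfold rank1. destruct Hh as [[ha _] _]. rewrite ha, scal_add_l. auto.
  - intros a b. unfold rank1. destruct Hh as [[_ hs] _]. rewrite hs, scal_assoc. auto.
  - intros u Hu. destruct (BW_sub (fun n => h (u n)) 1) as [phi [c [Hphi Hc]]].
    { intro n. eapply Rle_trans. apply unit_bound; auto. auto. }
    exists phi, (scal c y). split; auto. unfold rank1. apply (sc_scal_l (fun n => h (u (phi n)))); auto.
Qed.

Section Main1.
Variables X Y : NormedSpace.
Hypothesis HXr : reflexive X.

Definition nofK (P : (X -> Y) -> R) := norm_one_functional (@compact_op X Y) op_add op_scal op_norm P.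
Definition nofY (f : Y -> R) := norm_one_functional (fun _ : Y => True) (@add Y) (@scal Y) (@norm Y) f.

Lemma norming_exists (B : X -> Y) : bounded_op X Y B ->
  exists u : nat -> X, (forall n, norm (u n) <= 1) /\ Un_cv (fun n => norm (B (u n))) (op_norm B).
Proof.
  intros HB.
  assert (Hx : forall n : nat, exists x : X, norm x <= 1 /\ op_norm B - / INR (S n) < norm (B x)).
  { intro n. apply NNPP. intro Hn.
    assert (0 < / INR (S n)) by (apply Rinv_0_lt_compat, lt_0_INR; lia).
    assert (op_norm B <= op_norm B - / INR (S n)).
    { apply opn_le; auto. intros x Hx. apply Rnot_lt_le. intro H'. apply Hn. exists x; split; auto. }
    lra. }
  set (xs := fun n => proj1_sig (constructive_indefinite_description _ (Hx n))).
  assert (Hxs : forall n, norm (xs n) <= 1 /\ op_norm B - / INR (S n) < norm (B (xs n))).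
  { intro n. unfold xs. destruct (constructive_indefinite_description _ (Hx n)). auto. }
  exists xs. split. intro n; apply Hxs.
  apply (Un_cv_squeeze _ _ _ Un_cv_invS). intro n. destruct (Hxs n) as [H1 H2].
  pose proof (opn_ub X Y B (xs n) HB H1). apply Rabs_le_iff. lra.
Qed.

Lemma attain (B : X -> Y) : compact_op B -> exists x, norm x <= 1 /\ norm (B x) = op_norm B.
Proof.
  intros HK. pose proof (compact_bounded X Y B HK) as HB.
  destruct (norming_exists B HB) as [u [Hu Hn]].
  destruct (proj2 HK u Hu) as [phi [l [Hphi Hl]]].
  destruct (closure_lemma X Y HXr B B (fun n => u (phi n)) l l HB HB) as [x [Hx [E _]]]; auto.
  exists x. split; auto. rewrite E. apply (UL_sequence (fun n => norm (B (u (phi n))))).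
  apply sc_norm; auto. apply (Un_cv_sub (fun n => norm (B (u n)))); auto.
Qed.

Lemma unit_attain (T : X -> Y) x : bounded_op X Y T -> norm x <= 1 -> norm (T x) = op_norm T -> 0 < op_norm T -> norm x = 1.
Proof.
  intros HB Hx HT Hp. destruct Hx as [Hx|Hx]; auto. exfalso.
  pose proof (opn_bound X Y T x HB). pose proof (norm_nonneg x).
  assert (op_norm T * norm x < op_norm T * 1) by (apply Rmult_lt_compat_l; auto). lra.
Qed.

Lemma subnorming (T B : X -> Y) (u : nat -> X) : compact_op T -> compact_op B -> 0 < op_norm T ->
  (forall n, norm (u n) <= 1) -> Un_cv (fun n => norm (T (u n))) (op_norm T) ->
  exists psi x, strictly_increasing psi /\ norm_attainment_set T x /\
    seq_converges (fun n => T (u (psi n))) (T x) /\ seq_converges (fun n => B (u (psi n))) (B x).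
Proof.
  intros HT HB Hp Hu Hn.
  destruct (proj2 HT u Hu) as [p1 [y [Hp1 Hy]]].
  destruct (proj2 HB (fun n => u (p1 n))) as [p2 [z [Hp2 Hz]]]. intro; apply Hu.
  assert (Hy' : seq_converges (fun n => T (u (p1 (p2 n)))) y) by (apply (sc_sub (fun n => T (u (p1 n)))); auto).
  destruct (closure_lemma X Y HXr T B (fun n => u (p1 (p2 n))) y z) as [x [Hx [Ey Ez]]]; auto.
  apply compact_bounded; auto. apply compact_bounded; auto.
  exists (fun n => p1 (p2 n)), x. split. apply si_comp; auto.
  assert (HTx : norm (T x) = op_norm T).
  { rewrite Ey. apply (UL_sequence (fun n => norm (T (u (p1 (p2 n)))))). apply sc_norm; auto.
    apply (Un_cv_sub (fun n => norm (T (u n)))); auto. apply si_comp; auto. }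
  split. split; auto. apply (unit_attain T); auto. apply compact_bounded; auto.
  rewrite Ey, Ez. auto.
Qed.

Lemma nofK_mk (T : X -> Y) (P : (X -> Y) -> R) : compact_op T -> 0 < op_norm T ->
  (forall A B, compact_op A -> compact_op B -> P (op_add A B) = P A + P B) ->
  (forall a A, compact_op A -> P (op_scal a A) = a * P A) ->
  (forall A, compact_op A -> Rabs (P A) <= op_norm A) -> P T = op_norm T -> nofK P.
Proof.
  intros HT Hp Ha Hs Hb HPT. split; [|split]; auto. split.
  - intros r [u [Hu [Hu1 ->]]]. eapply Rle_trans; [apply Hb; auto|]. auto.
  - intros b Hub. apply Hub. exists (op_scal (/ op_norm T) T). split; [apply compact_scal; auto|split].
    + rewrite opn_scal by (apply compact_bounded; auto). rewrite Rabs_right. right; field; lra.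
      apply Rle_ge; left; apply Rinv_0_lt_compat; auto.
    + rewrite Hs, HPT by auto. rewrite Rinv_l by lra. rewrite Rabs_R1; auto.
Qed.

Lemma nofK_bound (P : (X -> Y) -> R) A : nofK P -> compact_op A -> Rabs (P A) <= op_norm A.
Proof.
  intros [Ha [Hs Hlub]] HA. pose proof (compact_bounded X Y A HA) as HB.
  destruct (opn_nonneg X Y A HB) as [Hp|Hz].
  - assert (H1 : Rabs (P (op_scal (/ op_norm A) A)) <= 1).
    { apply Hlub. exists (op_scal (/ op_norm A) A). split. apply compact_scal; auto. split; auto.
      rewrite opn_scal by auto. rewrite Rabs_right. right; field; lra.
      apply Rle_ge; left; apply Rinv_0_lt_compat; auto. }
    rewrite Hs, Rabs_mult, Rabs_right in H1 by (auto; apply Rle_ge; left; apply Rinv_0_lt_compat; auto).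
    apply Rmult_le_compat_l with (r := op_norm A) in H1; [|lra].
    replace (op_norm A * (/ op_norm A * Rabs (P A))) with (Rabs (P A)) in H1 by (field; lra). lra.
  - assert (E : A = op_scal 0 A).
    { apply functional_extensionality. intro x. unfold op_scal. rewrite scal_0.
      apply norm_eq_zero. pose proof (opn_bound X Y A x HB). rewrite <- Hz in H.
      pose proof (norm_nonneg (A x)). lra. }
    rewrite E at 1. rewrite Hs by auto. rewrite Rmult_0_l, Rabs_R0. lra.
Qed.

Lemma nofY_unit (f : Y -> R) : nofY f -> unit_func f.
Proof.
  intros [Ha [Hs Hlub]]. split. split; intros; auto.
  intro x. destruct (classic (x = zero)) as [->|Hx].
  - rewrite <- (scal_0 zero), Hs, Rmult_0_l, Rabs_R0; auto. rewrite scal_0. apply norm_nonneg.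
  - pose proof (norm_pos _ Hx).
    assert (H1 : Rabs (f (scal (/ norm x) x)) <= 1).
    { apply Hlub. exists (scal (/ norm x) x). split; auto. split; auto. rewrite norm_scal, Rabs_right.
      right; field; lra. apply Rle_ge; left; apply Rinv_0_lt_compat; auto. }
    rewrite Hs, Rabs_mult, Rabs_right in H1 by (auto; apply Rle_ge; left; apply Rinv_0_lt_compat; auto).
    apply Rmult_le_compat_l with (r := norm x) in H1; [|lra].
    replace (norm x * (/ norm x * Rabs (f x))) with (Rabs (f x)) in H1 by (field; lra). lra.
Qed.

Lemma unit_nofY (f : Y -> R) y : unit_func f -> f y = norm y -> y <> zero -> nofY f.
Proof.
  intros Hf Hfy Hy. destruct Hf as [[Ha Hs] Hb]. split; [|split]; auto. split.
  - intros r [u [_ [Hu ->]]]. eapply Rle_trans; [apply Hb|]. auto.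
  - intros c Hc. apply Hc. pose proof (norm_pos _ Hy). exists (scal (/ norm y) y). split; auto. split.
    + rewrite norm_scal, Rabs_right. right; field; lra. apply Rle_ge; left; apply Rinv_0_lt_compat; auto.
    + rewrite Hs, Hfy. rewrite Rinv_l by lra. rewrite Rabs_R1. auto.
Qed.

Lemma smooth_char (y : Y) : smooth_point y <->
  (y <> zero /\ exists f, unit_func f /\ f y = norm y /\
     forall g, unit_func g -> g y = norm y -> forall v, g v = f v).
Proof.
  split.
  - intros [_ [Hy [f [Hf [Hfy Hu]]]]]. split; auto. exists f. split. apply nofY_unit; auto. split; auto.
    intros g Hg Hgy v. apply (Hu g); auto. apply (unit_nofY g y); auto.
  - intros [Hy [f [Hf [Hfy Hu]]]]. split; auto. split; auto. exists f. split. apply (unit_nofY f y); auto.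
    split; auto. intros g Hg Hgy u _. apply Hu; auto. apply nofY_unit; auto.
Qed.

End Main1.

Open Scope R_scope.

Lemma sub_add_l {N : NormedSpace} (a b : N) : sub (add a b) a = b.
Proof. unfold sub. rewrite (add_comm a b), <- add_assoc, add_opp, add_zero. auto. Qed.

Lemma norm_add_ge {N : NormedSpace} (a b : N) : norm a - norm b <= norm (add a b).
Proof. pose proof (norm_rev (add a b) a). rewrite sub_add_l in H. apply Rabs_le_iff in H. lra. Qed.

Lemma sc_to_zero {N : NormedSpace} (w : nat -> N) l : seq_converges w l -> Un_cv (fun n => norm (sub (w n) l)) 0.
Proof.
  intros H eps He. destruct (H eps He) as [K HK]. exists K. intros n Hn. unfold Rdist.
  rewrite Rminus_0_r, Rabs_right by (apply Rle_ge, norm_nonneg). auto.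
Qed.

Lemma unit_sign {N : NormedSpace} (g : N -> R) sg : sg * sg = 1 -> unit_func g -> unit_func (fun v => sg * g v).
Proof.
  intros Hs [[Ha Hsc] Hb]. split; [split|].
  - intros. rewrite Ha. ring.
  - intros. rewrite Hsc. ring.
  - intros x. rewrite Rabs_mult. assert (Rabs sg = 1).
    { assert (Rabs sg * Rabs sg = 1) by (rewrite <- Rabs_mult, Hs, Rabs_R1; auto).
      pose proof (Rabs_pos sg). nra. }
    rewrite H, Rmult_1_l. auto.
Qed.

Lemma sip_bound {N : NormedSpace} (s : N -> N -> R) v w : compatible_sip s -> Rabs (s v w) <= norm v * norm w.
Proof.
  intros [_ [_ [_ [Hcs [_ Hn]]]]]. specialize (Hcs v w). rewrite !Hn in Hcs.
  pose proof (norm_nonneg v). pose proof (norm_nonneg w).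
  assert (Rabs (s v w) ^ 2 <= (norm v * norm w) ^ 2).
  { replace (Rabs (s v w) ^ 2) with (s v w ^ 2) by (unfold Rabs; destruct Rcase_abs; ring). nra. }
  pose proof (Rabs_pos (s v w)). apply Rsqr_incr_0_var; unfold Rsqr; nra.
Qed.

Lemma Un_cv_shift (u : nat -> R) l N : Un_cv (fun n => u (n + N)%nat) l -> Un_cv u l.
Proof.
  intros H eps He. destruct (H eps He) as [K HK]. exists (K + N)%nat. intros n Hn.
  replace n with ((n - N) + N)%nat by lia. apply HK. lia.
Qed.

Lemma si_shift N : strictly_increasing (fun n => (n + N)%nat).
Proof. intro n. lia. Qed.

Lemma sign_of (X : NormedSpace) (x x0 : X) : x = x0 \/ x = opp x0 -> exists sg, sg * sg = 1 /\ x = scal sg x0.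
Proof.
  intros [E|E]; rewrite E. exists 1. split. ring. rewrite scal_one; auto.
  exists (-1). split. ring. apply opp_scal.
Qed.

Section Main2.
Variables X Y : NormedSpace.
Hypothesis HXr : reflexive X.
Variable T : X -> Y.
Hypothesis HTK : compact_op T.
Hypothesis HT0 : T <> op_zero.

Let HTB := compact_bounded X Y T HTK.
Let nT_pos := opn_pos X Y T HTB HT0.

Lemma T_scal a x : T (scal a x) = scal a (T x).
Proof. apply (proj2 (proj1 HTK)). Qed.

Lemma op_scal_ev (A : X -> Y) a x : op_scal a A x = scal a (A x).
Proof. auto. Qed.

Lemma psi_nof (g : Y -> R) x : unit_func g -> norm_attainment_set T x -> g (T x) = norm (T x) ->
  nofK X Y (fun A => g (A x)) /\ g (T x) = op_norm T.
Proof.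
  intros Hg [Nx NTx] Hgx. rewrite NTx in Hgx. split; auto.
  apply (nofK_mk X Y T); auto.
  - intros A B _ _. unfold op_add. destruct Hg as [[ga _] _]. auto.
  - intros a A _. unfold op_scal. destruct Hg as [[_ gs] _]. auto.
  - intros A HA. eapply Rle_trans; [apply unit_bound; auto|]. apply opn_ub. apply compact_bounded; auto. lra.
Qed.

Lemma attain_T : exists x0, norm_attainment_set T x0.
Proof.
  destruct (attain X Y HXr T HTK) as [x [Hx Hn]]. exists x. split; auto.
  apply (unit_attain X Y T); auto.
Qed.

Lemma nas_opp x : norm_attainment_set T x -> norm_attainment_set T (opp x).
Proof.
  intros [N1 N2]. split. rewrite norm_opp; auto. rewrite opp_scal, T_scal, <- opp_scal, norm_opp. auto.
Qed.

Lemma nTx_pos x : norm_attainment_set T x -> T x <> zero.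
Proof. intros [_ E] Z. rewrite Z, norm_zero in E. lra. Qed.

Lemma part1_fwd : smooth_point_K T ->
  exists x0 : X, norm x0 = 1 /\ (forall x, norm_attainment_set T x <-> (x = x0 \/ x = opp x0)) /\ smooth_point (T x0).
Proof.
  intros [_ [_ [P0 [HP0 [HP0T HU]]]]].
  assert (U : forall x g, norm_attainment_set T x -> unit_func g -> g (T x) = norm (T x) ->
            forall A, compact_op A -> g (A x) = P0 A).
  { intros x g Hx Hg Hgx A HA. destruct (psi_nof g x Hg Hx Hgx) as [H1 H2].
    apply (HU (fun A => g (A x))); auto. }
  destruct attain_T as [x0 Hx0]. exists x0. split. apply Hx0. split.
  - intro x1. split.
    + intro Hx1.
      destruct (support_exists (T x0)) as [g0 [Hg0 Hg0x]]. destruct (support_exists (T x1)) as [g1 [Hg1 Hg1x]].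
      set (c := g1 (T x0) / op_norm T).
      assert (Hh : forall h, unit_func h -> h (sub x0 (scal c x1)) = 0).
      { intros h Hh. assert (HA := rank1_compact h (T x0) Hh).
        pose proof (U x0 g0 Hx0 Hg0 Hg0x _ HA) as E0. pose proof (U x1 g1 Hx1 Hg1 Hg1x _ HA) as E1.
        rewrite <- E1 in E0. unfold rank1 in E0. rewrite !(unit_scal _ _ _ Hg0), !(unit_scal _ _ _ Hg1) in E0.
        rewrite Hg0x, (proj2 Hx0) in E0. rewrite lf_sub, unit_scal by (auto; apply Hh).
        unfold c. replace (h x0) with (h x1 * g1 (T x0) / op_norm T) by (rewrite <- E0; field; lra).
        field. lra. }
      assert (E : x0 = scal c x1) by (apply sub_eq, separation; auto).
      assert (Hc : Rabs c = 1) by (rewrite <- (proj1 Hx1), <- (Rmult_1_r (Rabs c)), <- (proj1 Hx1), <- norm_scal, <- E, (proj1 Hx0), (proj1 Hx1); auto; ring).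
      assert (E2 : x1 = scal c x0).
      { rewrite E, scal_assoc. assert (c * c = 1). { revert Hc; unfold Rabs; destruct Rcase_abs; intro Hc; nra. }
        rewrite H, scal_one. auto. }
      revert Hc. unfold Rabs. destruct Rcase_abs; intro Hc.
      * right. rewrite E2, opp_scal. f_equal. lra.
      * left. rewrite E2, Hc, scal_one. auto.
    + intros [-> | ->]; auto. apply nas_opp; auto.
  - apply smooth_char. split. apply nTx_pos; auto.
    destruct (support_exists (T x0)) as [f [Hf Hfx]]. exists f. split; auto. split; auto.
    intros g Hg Hgx v. destruct (support_exists x0) as [h0 [Hh0 Hh0x]].
    assert (HA := rank1_compact h0 v Hh0).
    pose proof (U x0 f Hx0 Hf Hfx _ HA) as E0. pose proof (U x0 g Hx0 Hg Hgx _ HA) as E1.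
    rewrite <- E0 in E1. unfold rank1 in E1. rewrite Hh0x, (proj1 Hx0), !scal_one in E1. auto.
Qed.

Section LemD.
Variable x0 : X.
Hypothesis N0 : norm x0 = 1.
Hypothesis HM : forall x, norm_attainment_set T x <-> (x = x0 \/ x = opp x0).
Variable f : Y -> R.
Hypothesis Hf : unit_func f.
Hypothesis Hfy : f (T x0) = norm (T x0).
Hypothesis Hu : forall g, unit_func g -> g (T x0) = norm (T x0) -> forall v, g v = f v.

Lemma x0_nas : norm_attainment_set T x0.
Proof. apply HM; auto. Qed.

Lemma lemD (B : X -> Y) : compact_op B -> forall eps, 0 < eps ->
  exists s, 0 < s /\ op_norm (op_add T (op_scal s B)) <= op_norm T + s * (f (B x0) + eps).
Proof.
  intros HB eps He. apply NNPP. intro Hn.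
  assert (Hall : forall s, 0 < s -> op_norm T + s * (f (B x0) + eps) < op_norm (op_add T (op_scal s B))).
  { intros s Hs. apply Rnot_le_lt. intro H. apply Hn. exists s; auto. }
  pose proof (compact_bounded X Y B HB) as HBB.
  set (sn := fun n => / INR (S n)).
  assert (Hsn : forall n, 0 < sn n) by (intro; apply Rinv_0_lt_compat, lt_0_INR; lia).
  set (C := fun n => op_add T (op_scal (sn n) B)).
  assert (HC : forall n, compact_op (C n)) by (intro; apply compact_add; auto; apply compact_scal; auto).
  assert (Hx : forall n, exists x, norm x <= 1 /\ norm (C n x) = op_norm (C n)) by (intro; apply attain; auto).
  set (xs := fun n => proj1_sig (constructive_indefinite_description _ (Hx n))).
  assert (Hxs : forall n, norm (xs n) <= 1 /\ norm (C n (xs n)) = op_norm (C n)).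
  { intro n. unfold xs. destruct (constructive_indefinite_description _ (Hx n)). auto. }
  assert (Hg : forall n, exists g, unit_func g /\ g (C n (xs n)) = norm (C n (xs n))) by (intro; apply support_exists).
  set (gs := fun n => proj1_sig (constructive_indefinite_description _ (Hg n))).
  assert (Hgs : forall n, unit_func (gs n) /\ gs n (C n (xs n)) = norm (C n (xs n))).
  { intro n. unfold gs. destruct (constructive_indefinite_description _ (Hg n)). auto. }
  set (nT := op_norm T). set (nB := op_norm B). pose proof (opn_nonneg X Y B HBB) as HnB. fold nB in HnB.
  assert (K1 : forall n, gs n (T (xs n)) + sn n * gs n (B (xs n)) = op_norm (C n)).
  { intro n. destruct (Hxs n) as [_ E]. destruct (Hgs n) as [Hgn Eg]. rewrite <- E, <- Eg.
    unfold C, op_add, op_scal. rewrite unit_lin; auto. }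
  assert (K2 : forall n, gs n (T (xs n)) <= norm (T (xs n)) /\ norm (T (xs n)) <= nT).
  { intro n. split. pose proof (unit_bound (gs n) (T (xs n)) (proj1 (Hgs n))). apply Rabs_le_iff in H. lra.
    apply opn_ub; auto. apply Hxs. }
  assert (K3 : forall n, Rabs (gs n (B (xs n))) <= nB).
  { intro n. eapply Rle_trans. apply unit_bound, Hgs. apply opn_ub; auto. apply Hxs. }
  assert (K4 : forall n, nT - sn n * nB <= op_norm (C n)).
  { intro n. apply Rle_trans with (norm (C n x0)).
    - unfold C, op_add, op_scal. eapply Rle_trans; [|apply norm_add_ge]. rewrite norm_scal, Rabs_right by (apply Rle_ge; left; auto).
      rewrite (proj2 x0_nas). fold nT. pose proof (opn_ub X Y B x0 HBB ltac:(lra)). fold nB in H.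
      pose proof (Hsn n). apply Rplus_le_compat_l, Ropp_le_contravar, Rmult_le_compat_l; lra.
    - apply opn_ub. apply compact_bounded; auto. lra. }
  assert (Star : forall n, f (B x0) + eps < gs n (B (xs n))).
  { intro n. specialize (Hall (sn n) (Hsn n)). fold (C n) nT in Hall. rewrite <- K1 in Hall.
    destruct (K2 n). assert (sn n * (f (B x0) + eps) < sn n * gs n (B (xs n))) by lra.
    apply Rmult_lt_reg_l in H1; auto. }
  assert (K5 : forall n, Rabs (gs n (T (xs n)) - nT) <= 2 * nB * sn n).
  { intro n. apply Rabs_le_iff. destruct (K2 n). pose proof (K1 n). pose proof (K4 n). pose proof (K3 n).
    apply Rabs_le_iff in H3. pose proof (Hsn n).
    assert (sn n * gs n (B (xs n)) <= sn n * nB) by (apply Rmult_le_compat_l; lra). nra. }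
  assert (Hcv1 : Un_cv (fun n => gs n (T (xs n))) nT).
  { apply (Un_cv_squeeze _ (fun n => 2 * nB * sn n)). replace 0 with (2 * nB * 0) by ring.
    apply Un_cv_const_mult, Un_cv_invS. apply K5. }
  assert (Hcv2 : Un_cv (fun n => norm (T (xs n))) nT).
  { apply (Un_cv_squeeze _ (fun n => 2 * nB * sn n)). replace 0 with (2 * nB * 0) by ring.
    apply Un_cv_const_mult, Un_cv_invS. intro n. destruct (K2 n). pose proof (K5 n). apply Rabs_le_iff in H1.
    apply Rabs_le_iff. lra. }
  destruct (subnorming X Y HXr T B xs HTK HB nT_pos) as [psi [x [Hpsi [Hxn [HTx HBx]]]]]; auto. intro; apply Hxs.
  destruct (sign_of X x x0 (proj1 (HM x) Hxn)) as [sg [Hsg Ex]].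
  set (k := fun n => fun v => sg * gs (psi n) v).
  assert (Hk : forall n, unit_func (k n)) by (intro; apply unit_sign; auto; apply Hgs).
  assert (ETx0 : T x0 = scal sg (T x)) by (rewrite Ex, T_scal, scal_assoc, Hsg, scal_one; auto).
  assert (Hkc : Un_cv (fun n => k n (T x0)) (norm (T x0))).
  { rewrite (proj2 x0_nas). fold nT.
    apply (Un_cv_squeeze _ (fun n => norm (sub (T (xs (psi n))) (T x)) + 2 * nB * sn (psi n))).
    - replace 0 with (0 + 0) by ring. apply CV_plus. apply sc_to_zero; auto.
      apply (Un_cv_sub (fun n => 2 * nB * sn n)); auto. replace 0 with (2 * nB * 0) by ring.
      apply Un_cv_const_mult, Un_cv_invS.
    - intro n. unfold k. rewrite ETx0, (unit_scal (gs (psi n))) by apply Hgs.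
      replace (sg * (sg * gs (psi n) (T x))) with (gs (psi n) (T x)) by (rewrite <- Rmult_assoc, Hsg; ring).
      pose proof (unit_bound (gs (psi n)) (sub (T (xs (psi n))) (T x)) (proj1 (Hgs (psi n)))).
      rewrite lf_sub in H by apply Hgs. pose proof (K5 (psi n)).
      replace (gs (psi n) (T x) - nT) with ((gs (psi n) (T (xs (psi n))) - nT) - (gs (psi n) (T (xs (psi n))) - gs (psi n) (T x))) by ring.
      eapply Rle_trans; [apply Rabs_triang|]. rewrite Rabs_Ropp. lra. }
  assert (Hw : seq_converges (fun n => scal sg (B (xs (psi n)))) (B x0)).
  { replace (B x0) with (scal sg (B x)). apply sc_scal; auto.
    rewrite Ex. destruct HB as [[_ Bs] _]. rewrite Bs, scal_assoc, Hsg, scal_one; auto. }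
  pose proof (smulian2 Y (T x0) f Hf Hfy Hu k _ _ Hk Hkc Hw) as Hlim.
  assert (Hge : f (B x0) + eps <= f (B x0)).
  { apply (Un_cv_ge _ _ _ Hlim). intro n. unfold k. rewrite (unit_scal (gs (psi n))) by apply Hgs.
    replace (sg * (sg * gs (psi n) (B (xs (psi n))))) with (gs (psi n) (B (xs (psi n)))) by (rewrite <- Rmult_assoc, Hsg; ring).
    left; apply Star. }
  lra.
Qed.

End LemD.
End Main2.

Open Scope R_scope.

Section Main3.
Variables X Y : NormedSpace.
Hypothesis HXr : reflexive X.
Variable T : X -> Y.
Hypothesis HTK : compact_op T.
Hypothesis HT0 : T <> op_zero.

Let HTB := compact_bounded X Y T HTK.
Let nT_pos := opn_pos X Y T HTB HT0.

Definition RHS (A : X -> Y) :=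
  forall s : Y -> Y -> R, compatible_sip s ->
  forall u : nat -> X, norming_sequence T u ->
  forall l, subsequential_limit (fun n => s (A (u n)) (T (u n))) l -> l = 0.

Lemma BJ_of_f0 (x0 : X) (f : Y -> R) (A : X -> Y) : norm_attainment_set T x0 -> unit_func f ->
  f (T x0) = norm (T x0) -> compact_op A -> f (A x0) = 0 -> BJ_orth_K T A.
Proof.
  intros Hx0 Hf Hfy HA HfA lam. apply Rle_ge.
  assert (HK : compact_op (op_add T (op_scal lam A))) by (apply compact_add; auto; apply compact_scal; auto).
  eapply Rle_trans; [|apply (opn_ub X Y _ x0); [apply compact_bounded; auto|]].
  2: { rewrite (proj1 Hx0); lra. }
  assert (H1 := unit_bound f (op_add T (op_scal lam A) x0) Hf). apply Rabs_le_iff in H1.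
  assert (E : f (op_add T (op_scal lam A) x0) = op_norm T).
  { unfold op_add, op_scal. rewrite unit_lin; auto. rewrite HfA, Hfy, (proj2 Hx0). ring. }
  lra.
Qed.

Lemma const_norming x : norm_attainment_set T x -> norming_sequence T (fun _ => x).
Proof.
  intros [N1 N2]. split; auto. intros eps He. exists O. intros. unfold Rdist. rewrite N2, Rminus_diag, Rabs_R0. auto.
Qed.

Lemma const_sublim (c : R) : subsequential_limit (fun _ => c) c.
Proof. exists (fun n => n). split. apply si_id. intros eps He. exists O. intros. unfold Rdist. rewrite Rminus_diag, Rabs_R0. auto. Qed.

Lemma RHS_const A x s : RHS A -> norm_attainment_set T x -> compatible_sip s -> s (A x) (T x) = 0.
Proof.
  intros H Hx Hs. apply (H s Hs (fun _ => x) (const_norming x Hx)). apply const_sublim.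
Qed.

Lemma part1_bwd : (exists x0 : X, norm x0 = 1 /\ (forall x, norm_attainment_set T x <-> (x = x0 \/ x = opp x0)) /\ smooth_point (T x0)) ->
  smooth_point_K T.
Proof.
  intros [x0 [N0 [HM Hs]]]. apply smooth_char in Hs. destruct Hs as [HTx0 [f [Hf [Hfy Hu]]]].
  pose proof (x0_nas X Y T x0 HM) as Hx0.
  destruct (psi_nof X Y T HTK HT0 f x0 Hf Hx0 Hfy) as [Hnof HPT].
  split; auto. split; auto. exists (fun A => f (A x0)). split; auto. split; auto.
  intros P HP HPT' A HA.
  assert (Le : forall B, compact_op B -> P B <= f (B x0)).
  { intros B HB. apply Rnot_lt_le. intro Hlt.
    destruct (lemD X Y HXr T HTK HT0 x0 N0 HM f Hf Hfy Hu B HB ((P B - f (B x0)) / 2)) as [s [Hs Hb]]. lra.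
    assert (HsB : compact_op (op_scal s B)) by (apply compact_scal; auto).
    destruct HP as [Pa [Ps Plub]].
    assert (E : P (op_add T (op_scal s B)) = op_norm T + s * P B) by (rewrite Pa, Ps, HPT'; auto).
    pose proof (nofK_bound X Y P (op_add T (op_scal s B)) (conj Pa (conj Ps Plub)) ltac:(apply compact_add; auto)).
    rewrite E in H. apply Rabs_le_iff in H.
    assert (s * P B <= s * (f (B x0) + (P B - f (B x0)) / 2)) by lra.
    apply Rmult_le_reg_l in H0; auto. lra. }
  apply Rle_antisym.
  - apply Le; auto.
  - pose proof (Le (op_scal (-1) A) ltac:(apply compact_scal; auto)).
    destruct HP as [Pa [Ps Plub]]. rewrite Ps in H; auto. unfold op_scal in H. rewrite unit_scal in H; auto. lra.
Qed.

Lemma part2_fwd : smooth_point_K T -> forall A, compact_op A -> (BJ_orth_K T A <-> RHS A).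
Proof.
  intros Hsm A HA. destruct (part1_fwd X Y HXr T HTK HT0 Hsm) as [x0 [N0 [HM Hs]]].
  apply smooth_char in Hs. destruct Hs as [HTx0 [f [Hf [Hfy Hu]]]].
  pose proof (x0_nas X Y T x0 HM) as Hx0.
  assert (C1 : BJ_orth_K T A <-> f (A x0) = 0).
  { split.
    - intros HBJ. apply NNPP. intro Hne.
      set (sg := if Rlt_dec 0 (f (A x0)) then -1 else 1).
      assert (Hneg : f (op_scal sg A x0) < 0).
      { unfold op_scal. rewrite unit_scal; auto. unfold sg. destruct Rlt_dec; [lra|].
        assert (f (A x0) < 0) by lra. lra. }
      destruct (lemD X Y HXr T HTK HT0 x0 N0 HM f Hf Hfy Hu (op_scal sg A) ltac:(apply compact_scal; auto)
        (- f (op_scal sg A x0) / 2)) as [s [Hs Hb]]. lra.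
      specialize (HBJ (s * sg)).
      assert (E : op_add T (op_scal s (op_scal sg A)) = op_add T (op_scal (s * sg) A)).
      { apply functional_extensionality. intro x. unfold op_add, op_scal. rewrite scal_assoc. auto. }
      rewrite E in Hb.
      assert (s * (f (op_scal sg A x0) + - f (op_scal sg A x0) / 2) < 0).
      { replace (s * (f (op_scal sg A x0) + - f (op_scal sg A x0) / 2)) with (s * (f (op_scal sg A x0) / 2)) by field.
        assert (f (op_scal sg A x0) / 2 < 0) by lra. nra. }
      lra.
    - intros H0. apply (BJ_of_f0 x0 f A); auto. }
  assert (C2 : RHS A <-> f (A x0) = 0).
  { split.
    - intros HR. destruct (sip_exists Y (T x0) HTx0 f Hf Hfy) as [s [Hs Hsv]].
      pose proof (RHS_const A x0 s HR Hx0 Hs). rewrite Hsv in H.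
      apply Rmult_integral in H. destruct H; auto. exfalso. apply HTx0. apply norm_eq_zero; auto.
    - intros H0 s Hs u [Hu1 Hun] l [phi [Hphi Hl]].
      destruct (subnorming X Y HXr T A (fun n => u (phi n)) HTK HA nT_pos) as [psi [x [Hpsi [Hxn [HTx HAx]]]]].
      { intro; rewrite Hu1; lra. }
      { apply (Un_cv_sub (fun n => norm (T (u n)))); auto. }
      destruct (sign_of X x x0 (proj1 (HM x) Hxn)) as [sg [Hsg Ex]].
      set (b := fun n => T (u (phi (psi n)))). set (a := fun n => A (u (phi (psi n)))).
      assert (Hb : seq_converges b (T x)) by auto.
      assert (Hbn : Un_cv (fun n => norm (b n)) (op_norm T)).
      { rewrite <- (proj2 Hxn). apply sc_norm; auto. }
      destruct (Hbn (op_norm T / 2)) as [Nn HNn]. lra.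
      assert (Hbnz : forall n, b (n + Nn)%nat <> zero).
      { intros n Z. specialize (HNn (n + Nn)%nat ltac:(lia)). rewrite Z, norm_zero in HNn. unfold Rdist in HNn.
        apply Rabs_def2 in HNn. lra. }
      set (b' := fun n => b (n + Nn)%nat). set (a' := fun n => a (n + Nn)%nat).
      assert (Hb' : seq_converges b' (T x)) by (apply (sc_sub b); auto; apply si_shift).
      assert (Ha' : seq_converges a' (A x)) by (apply (sc_sub a); auto; apply si_shift).
      assert (Hb'n : Un_cv (fun n => norm (b' n)) (op_norm T)) by (apply (Un_cv_sub (fun n => norm (b n))); auto; apply si_shift).
      set (k := fun n => fun v => sg * s v (b' n) / norm (b' n)).
      assert (Hnb : forall n, 0 < norm (b' n)) by (intro; apply norm_pos, Hbnz).
      assert (Hk : forall n, unit_func (k n)).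
      { intro n. pose proof Hs as HsX; destruct HsX as [Sa [Ssc _]]. pose proof (Hnb n). split; [split|].
        - intros. unfold k. rewrite Sa. field. lra.
        - intros. unfold k. rewrite Ssc. field. lra.
        - intro v. unfold k. unfold Rdiv. rewrite !Rabs_mult, Rabs_Rinv by lra. rewrite (Rabs_right (norm (b' n))) by lra.
          assert (Rabs sg = 1). { assert (Rabs sg * Rabs sg = 1) by (rewrite <- Rabs_mult, Hsg, Rabs_R1; auto). pose proof (Rabs_pos sg). nra. }
          rewrite H1, Rmult_1_l. pose proof (sip_bound s v (b' n) Hs).
          apply Rmult_le_reg_r with (norm (b' n)); auto. field_simplify; lra. }
      assert (ETx0 : T x0 = scal sg (T x)) by (rewrite Ex, (T_scal X Y T HTK), scal_assoc, Hsg, scal_one; auto).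
      assert (Sn : forall v, s v v = norm v ^ 2) by apply Hs.
      assert (Hkc : Un_cv (fun n => k n (T x0)) (norm (T x0))).
      { rewrite (proj2 Hx0).
        apply (Un_cv_squeeze _ (fun n => norm (sub (b' n) (T x)) + Rabs (norm (b' n) - op_norm T))).
        - replace 0 with (0 + 0) by ring. apply CV_plus. apply sc_to_zero; auto.
          intros eps He. destruct (Hb'n eps He) as [K HK]. exists K. intros n Hn. unfold Rdist in *.
          rewrite Rminus_0_r, Rabs_Rabsolu. auto.
        - intro n. unfold k. rewrite ETx0. pose proof Hs as HsX; destruct HsX as [Sa [Ssc Srest]]. rewrite Ssc.
          replace (sg * (sg * s (T x) (b' n)) / norm (b' n)) with (s (T x) (b' n) / norm (b' n)) by (rewrite <- Rmult_assoc, Hsg; field; specialize (Hnb n); lra).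
          pose proof (Hnb n).
          assert (E1 : s (T x) (b' n) = s (b' n) (b' n) - s (sub (b' n) (T x)) (b' n)).
          { unfold sub. rewrite Sa, opp_scal, Ssc. ring. }
          rewrite E1, Sn. pose proof (sip_bound s (sub (b' n) (T x)) (b' n) Hs).
          replace ((norm (b' n) ^ 2 - s (sub (b' n) (T x)) (b' n)) / norm (b' n) - op_norm T) with
            ((norm (b' n) - op_norm T) - s (sub (b' n) (T x)) (b' n) / norm (b' n)) by (field; lra).
          eapply Rle_trans; [apply Rabs_triang|]. rewrite Rabs_Ropp. unfold Rdiv. rewrite Rabs_mult, Rabs_Rinv, (Rabs_right (norm (b' n))) by lra.
          assert (Rabs (s (sub (b' n) (T x)) (b' n)) * / norm (b' n) <= norm (sub (b' n) (T x))).
          { apply Rmult_le_reg_r with (norm (b' n)); auto. field_simplify; lra. }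
          lra. }
      assert (Hw : seq_converges (fun n => scal sg (a' n)) (A x0)).
      { replace (A x0) with (scal sg (A x)). apply sc_scal; auto.
        rewrite Ex. destruct HA as [[_ As] _]. rewrite As, scal_assoc, Hsg, scal_one; auto. }
      pose proof (smulian2 Y (T x0) f Hf Hfy Hu k _ _ Hk Hkc Hw) as Hlim. rewrite H0 in Hlim.
      assert (Hprod : Un_cv (fun n => s (a' n) (b' n)) 0).
      { replace 0 with (op_norm T * 0) by ring.
        apply (Un_cv_ext (fun n => norm (b' n) * k n (scal sg (a' n)))).
        - intro n. unfold k. pose proof Hs as HsX; destruct HsX as [Sa [Ssc _]]. rewrite Ssc. pose proof (Hnb n).
          replace (sg * (sg * s (a' n) (b' n))) with (s (a' n) (b' n)) by (rewrite <- Rmult_assoc, Hsg; ring). field. lra.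
        - apply CV_mult; auto. }
      assert (Hfull : Un_cv (fun n => s (a n) (b n)) 0) by (apply (Un_cv_shift _ _ Nn); auto).
      apply (UL_sequence (fun n => s (a n) (b n))); auto.
      apply (Un_cv_sub (fun n => s (A (u (phi n))) (T (u (phi n))))); auto. }
  rewrite C1, C2. tauto.
Qed.

End Main3.

Open Scope R_scope.

Section Main4.
Variables X Y : NormedSpace.
Hypothesis HXr : reflexive X.
Variable T : X -> Y.
Hypothesis HTK : compact_op T.
Hypothesis HT0 : T <> op_zero.

Let HTB := compact_bounded X Y T HTK.
Let nT_pos := opn_pos X Y T HTB HT0.

Lemma part2_bwd : (forall A, compact_op A -> (BJ_orth_K T A <-> RHS X Y T A)) -> smooth_point_K T.
Proof.
  intros H. apply (part1_bwd X Y HXr T HTK HT0).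
  destruct (attain_T X Y HXr T HTK HT0) as [x0 Hx0]. exists x0. split. apply Hx0.
  destruct (support_exists (T x0)) as [f [Hf Hfy]].
  pose proof (nTx_pos X Y T HTK HT0 x0 Hx0) as HTx0.
  split.
  - intro x1. split.
    + intro Hx1. apply NNPP. intro Hn.
      destruct (quot_functional X x0 x1 (proj1 Hx0) (proj1 Hx1)) as [h [Hh [Hh0 Hh1]]].
      { intro E. apply Hn. left; auto. }
      { intro E. apply Hn. right. rewrite opp_scal. auto. }
      set (A := rank1 h (T x1)). assert (HA : compact_op A) by (apply rank1_compact; auto).
      assert (HBJ : BJ_orth_K T A).
      { apply (BJ_of_f0 X Y T HTK x0 f A); auto. unfold A, rank1. rewrite Hh0, scal_0. apply lf_zero, Hf. }
      apply H in HBJ; auto.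
      pose proof (nTx_pos X Y T HTK HT0 x1 Hx1) as HTx1.
      destruct (sip_exists_any Y (T x1) HTx1) as [s Hs].
      pose proof (RHS_const X Y T A x1 s HBJ Hx1 Hs). unfold A, rank1 in H0.
      destruct Hs as [Sa [Ssc [Spos _]]]. rewrite Ssc in H0. apply Rmult_integral in H0.
      destruct H0 as [H0|H0]. auto. specialize (Spos _ HTx1). lra.
    + intros [E|E]; rewrite E; auto. apply (nas_opp X Y T HTK); auto.
  - apply smooth_char. split; auto. exists f. split; auto. split; auto.
    intros g Hg Hgy v. apply NNPP. intro Hne.
    set (nT := norm (T x0)). assert (HnT : 0 < nT) by (apply norm_pos; auto).
    set (w := sub v (scal (f v / nT) (T x0))).
    assert (Hfw : f w = 0) by (unfold w; rewrite lf_sub, (unit_scal f) by (auto; apply Hf); fold nT; rewrite Hfy; fold nT; field; lra).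
    assert (Hgw : g w <> 0).
    { unfold w. rewrite lf_sub, (unit_scal g) by (auto; apply Hg). rewrite Hgy. fold nT.
      replace (f v / nT * nT) with (f v) by (field; lra). intro E; apply Hne; lra. }
    destruct (support_exists x0) as [h0 [Hh0 Hh0x]]. rewrite (proj1 Hx0) in Hh0x.
    set (A := rank1 h0 w). assert (HA : compact_op A) by (apply rank1_compact; auto).
    assert (HAx : A x0 = w) by (unfold A, rank1; rewrite Hh0x, scal_one; auto).
    assert (HBJ : BJ_orth_K T A).
    { apply (BJ_of_f0 X Y T HTK x0 f A); auto. rewrite HAx; auto. }
    apply H in HBJ; auto.
    destruct (sip_exists Y (T x0) HTx0 g Hg Hgy) as [s [Hs Hsv]].
    pose proof (RHS_const X Y T A x0 s HBJ Hx0 Hs). rewrite HAx, Hsv in H0.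
    apply Rmult_integral in H0. destruct H0; [apply HTx0, norm_eq_zero; auto|contradiction].
Qed.

End Main4.

Theorem theorem3p1 (X Y : NormedSpace) (HXB : Banach X) (HXr : reflexive X)
  (T : X -> Y) (HTK : compact_op T) (HT0 : T <> op_zero) :
  (smooth_point_K T <->
   (exists x0 : X, norm x0 = 1 /\
      (forall x, norm_attainment_set T x <-> (x = x0 \/ x = opp x0)) /\
      smooth_point (T x0))) /\
  (smooth_point_K T <->
   (forall A : X -> Y, compact_op A ->
      (BJ_orth_K T A <->
       (forall s : Y -> Y -> R, compatible_sip s ->
        forall u : nat -> X, norming_sequence T u ->
        forall l, subsequential_limit (fun n => s (A (u n)) (T (u n))) l -> l = 0)))).
Proof.
  split; split.
  - apply (part1_fwd X Y HXr T HTK HT0).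
  - apply (part1_bwd X Y HXr T HTK HT0).
  - apply (part2_fwd X Y HXr T HTK HT0).
  - apply (part2_bwd X Y HXr T HTK HT0).
Qed.
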